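(* There exists $(\alpha_n(0))_{n\geq0}\in\mathbb{D}^\infty$ such that, for the solution $\alpha_n(t)$ of the Schur flow $\alpha_n'(t)=(1-|\alpha_n(t)|^2)(\alpha_{n+1}(t)-\alpha_{n-1}(t))$, $n\geq0$, $\alpha_{-1}\equiv-1$, with these initial conditions, $\alpha_0(t)$ does not have a limit as $t\to\infty$.
   Context: $\mathbb{D}=\{z\in\mathbb{C}:|z|<1\}$. For initial data in $\mathbb{D}^\infty$ the Schur flow has a unique global solution with values in $\mathbb{D}$; it is given by $\alpha_n(t)=\alpha_n(\mu_t)$, where $\mu$ is the probability measure on the unit circle with Verblunsky coefficients $\alpha_n(\mu)=\alpha_n(0)$ and $d\mu_t(\theta)=e^{2t\cos\theta}d\mu(\theta)/\int e^{2t\cos\theta}d\mu(\theta)$. *)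

(* Defs.v *)
From Stdlib Require Import Reals.
From Coquelicot Require Import Coquelicot.
Open Scope R_scope.

Definition in_disk (z : C) : Prop := Cmod z < 1.

Definition alpha_prev (a : nat -> R -> C) (n : nat) (t : R) : C :=
  match n with
  | O => RtoC (-1)
  | S m => a m t
  end.

Definition schur_flow_solution (a0 : nat -> C) (a : nat -> R -> C) : Prop :=
  (forall n t, in_disk (a n t)) /\
  (forall n, a n 0 = a0 n) /\
  (forall n t, is_derive (a n) t
      (Cmult (RtoC (1 - Cmod (a n t) ^ 2)) (Cminus (a (S n) t) (alpha_prev a n t)))).

(* Main.v *)
Require Import Defs.
From Stdlib Require Import Reals Lra Lia Psatz Classical.
From Coquelicot Require Import Coquelicot.
Open Scope R_scope.

Module M_A.
Open Scope R_scope.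

Lemma multR (x y : R) : mult x y = x * y. Proof. reflexivity. Qed.
Lemma plusR (x y : R) : plus x y = x + y. Proof. reflexivity. Qed.

Lemma is_derive_C_of (f : R -> C) x l :
  is_derive (fun t => Re (f t)) x (Re l) ->
  is_derive (fun t => Im (f t)) x (Im l) -> is_derive f x l.
Proof.
  intros H1 H2.
  assert (H := is_derive_plus _ _ x _ _
     (@is_derive_scal_l R_AbsRing C_R_NormedModule _ x _ (RtoC 1) H1)
     (@is_derive_scal_l R_AbsRing C_R_NormedModule _ x _ Ci H2)).
  eapply is_derive_ext; [|].
  2:{ replace l with (plus (scal (Re l) (RtoC 1)) (scal (Im l) Ci)). exact H.
      destruct l as [a b]; unfold plus, scal; simpl.
      unfold prod_plus, prod_scal; simpl. unfold plus, scal; simpl.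
      unfold mult, plus; simpl. f_equal; ring. }
  intros t; simpl. destruct (f t) as [a b]. unfold plus, scal; simpl.
  unfold prod_plus, prod_scal; simpl. unfold plus, scal; simpl.
  unfold mult, plus; simpl. unfold Re, Im; simpl. f_equal; ring.
Qed.

Lemma is_linear_Re : is_linear (U := C_R_NormedModule) (V := R_NormedModule) (fun z : C => Re z).
Proof.
  split.
  - intros [a b] [c d]; reflexivity.
  - intros k [a b]; reflexivity.
  - exists 1; split; [lra|]. intros [a b]. unfold norm; simpl.
    unfold prod_norm; simpl. unfold norm; simpl. unfold abs; simpl.
    rewrite Rmult_1_l, !Rmult_1_r.
    rewrite <- (sqrt_Rsqr (Rabs a)) at 1 by apply Rabs_pos.
    apply sqrt_le_1_alt. unfold Rsqr. pose proof (Rle_0_sqr (Rabs b)). unfold Rsqr in H. lra.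
Qed.

Lemma is_linear_Im : is_linear (U := C_R_NormedModule) (V := R_NormedModule) (fun z : C => Im z).
Proof.
  split.
  - intros [a b] [c d]; reflexivity.
  - intros k [a b]; reflexivity.
  - exists 1; split; [lra|]. intros [a b]. unfold norm; simpl.
    unfold prod_norm; simpl. unfold norm; simpl. unfold abs; simpl.
    rewrite Rmult_1_l, !Rmult_1_r.
    rewrite <- (sqrt_Rsqr (Rabs b)) at 1 by apply Rabs_pos.
    apply sqrt_le_1_alt. unfold Rsqr. pose proof (Rle_0_sqr (Rabs a)). unfold Rsqr in H. lra.
Qed.

Lemma is_derive_Re (f : R -> C) x l : is_derive f x l -> is_derive (fun t => Re (f t)) x (Re l).
Proof.
  intros H. unfold is_derive in *.
  eapply filterdiff_ext_lin.
  apply (filterdiff_comp' f (fun z : C => Re z) x _ (fun z : C => Re z) H).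
  apply filterdiff_linear, is_linear_Re.
  intros y; simpl. reflexivity.
Qed.

Lemma is_derive_Im (f : R -> C) x l : is_derive f x l -> is_derive (fun t => Im (f t)) x (Im l).
Proof.
  intros H. unfold is_derive in *.
  eapply filterdiff_ext_lin.
  apply (filterdiff_comp' f (fun z : C => Im z) x _ (fun z : C => Im z) H).
  apply filterdiff_linear, is_linear_Im.
  intros y; simpl. reflexivity.
Qed.


Lemma rd_mult (f g : R -> R) x df dg : is_derive f x df -> is_derive g x dg ->
  is_derive (fun t => f t * g t) x (df * g x + f x * dg).
Proof. intros H1 H2. apply (is_derive_mult f g x df dg H1 H2). intros; apply Rmult_comm. Qed.
Lemma rd_plus (f g : R -> R) x df dg : is_derive f x df -> is_derive g x dg ->
  is_derive (fun t => f t + g t) x (df + dg).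
Proof. intros H1 H2. apply (is_derive_plus f g x df dg H1 H2). Qed.
Lemma rd_minus (f g : R -> R) x df dg : is_derive f x df -> is_derive g x dg ->
  is_derive (fun t => f t - g t) x (df - dg).
Proof. intros H1 H2. apply (is_derive_minus f g x df dg H1 H2). Qed.
Lemma rd_opp (f : R -> R) x df : is_derive f x df ->
  is_derive (fun t => - f t) x (- df).
Proof. intros H1. apply (is_derive_opp f x df H1). Qed.
Lemma rd_inv (f : R -> R) x df : is_derive f x df -> f x <> 0 ->
  is_derive (fun t => / f t) x (- df / (f x)^2).
Proof. intros H1 H2. 
  pose proof (is_derive_inv f x df H1 H2) as H. eapply is_derive_ext; [|apply H].
  reflexivity. Qed.

Lemma rd_const (c : R) x : is_derive (fun _ : R => c) x 0.
Proof. apply (is_derive_const (K:=R_AbsRing) (V:=R_NormedModule)). Qed.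

Ltac cparts := intros; apply is_derive_C_of; simpl.

Lemma cd_const (c : C) x : is_derive (fun _ : R => c) x (RtoC 0).
Proof. apply is_derive_C_of; apply rd_const. Qed.

Lemma cd_plus (f g : R -> C) x df dg : is_derive f x df -> is_derive g x dg ->
  is_derive (fun t => Cplus (f t) (g t)) x (Cplus df dg).
Proof. intros H1 H2. apply is_derive_C_of.
  - apply (rd_plus _ _ _ _ _ (is_derive_Re _ _ _ H1) (is_derive_Re _ _ _ H2)).
  - apply (rd_plus _ _ _ _ _ (is_derive_Im _ _ _ H1) (is_derive_Im _ _ _ H2)).
Qed.
Lemma cd_minus (f g : R -> C) x df dg : is_derive f x df -> is_derive g x dg ->
  is_derive (fun t => Cminus (f t) (g t)) x (Cminus df dg).
Proof. intros H1 H2. apply is_derive_C_of.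
  - apply (rd_minus _ _ _ _ _ (is_derive_Re _ _ _ H1) (is_derive_Re _ _ _ H2)).
  - apply (rd_minus _ _ _ _ _ (is_derive_Im _ _ _ H1) (is_derive_Im _ _ _ H2)).
Qed.
Lemma cd_opp (f : R -> C) x df : is_derive f x df ->
  is_derive (fun t => Copp (f t)) x (Copp df).
Proof. intros H1. apply is_derive_C_of.
  - apply (rd_opp _ _ _ (is_derive_Re _ _ _ H1)).
  - apply (rd_opp _ _ _ (is_derive_Im _ _ _ H1)).
Qed.
Lemma cd_conj (f : R -> C) x df : is_derive f x df ->
  is_derive (fun t => Cconj (f t)) x (Cconj df).
Proof. intros H1. apply is_derive_C_of.
  - apply (is_derive_Re _ _ _ H1).
  - apply (rd_opp _ _ _ (is_derive_Im _ _ _ H1)).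
Qed.
Lemma is_derive_eqv {V : NormedModule R_AbsRing} (f g : R -> V) x l l' :
  is_derive f x l -> (forall t, f t = g t) -> l = l' -> is_derive g x l'.
Proof. intros H E ->. eapply is_derive_ext; eauto. Qed.

Lemma cd_mult (f g : R -> C) x df dg : is_derive f x df -> is_derive g x dg ->
  is_derive (fun t => Cmult (f t) (g t)) x (Cplus (Cmult df (g x)) (Cmult (f x) dg)).
Proof. intros H1 H2.
  pose proof (is_derive_Re _ _ _ H1) as A1. pose proof (is_derive_Im _ _ _ H1) as B1.
  pose proof (is_derive_Re _ _ _ H2) as A2. pose proof (is_derive_Im _ _ _ H2) as B2.
  apply is_derive_C_of.
  - eapply is_derive_eqv. apply (rd_minus _ _ _ _ _ (rd_mult _ _ _ _ _ A1 A2) (rd_mult _ _ _ _ _ B1 B2)).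
    intros t; simpl; reflexivity.
    destruct df, dg, (f x), (g x); unfold Re, Im; simpl; ring.
  - eapply is_derive_eqv. apply (rd_plus _ _ _ _ _ (rd_mult _ _ _ _ _ A1 B2) (rd_mult _ _ _ _ _ B1 A2)).
    intros t; simpl; reflexivity.
    destruct df, dg, (f x), (g x); unfold Re, Im; simpl; ring.
Qed.

Lemma cd_inv (f : R -> C) x df : is_derive f x df -> f x <> RtoC 0 ->
  is_derive (fun t => Cinv (f t)) x (Copp (Cdiv df (Cmult (f x) (f x)))).
Proof. intros H1 Hn.
  pose proof (is_derive_Re _ _ _ H1) as A1. pose proof (is_derive_Im _ _ _ H1) as B1.
  set (D := fun t => Re (f t) ^ 2 + Im (f t) ^ 2).
  assert (HD : is_derive D x (2 * Re (f x) * Re df + 2 * Im (f x) * Im df)).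
  { eapply is_derive_eqv; [apply (rd_plus _ _ _ _ _ (rd_mult _ _ _ _ _ A1 A1) (rd_mult _ _ _ _ _ B1 B1))| |].
    intros t; unfold D; simpl. ring. simpl. ring. }
  assert (D0 : D x <> 0).
  { unfold D. intros E. apply Hn. destruct (f x) as [a b]; unfold Re, Im in E; simpl in E.
    assert (a = 0) by nra. assert (b = 0) by nra. subst; reflexivity. }
  pose proof (rd_inv _ _ _ HD D0) as HI.
  unfold D in D0.
  apply is_derive_C_of.
  - eapply is_derive_eqv; [apply (rd_mult _ _ _ _ _ A1 HI)| |].
    intros t; unfold D; simpl. unfold Cinv; simpl. unfold Re, Im, Rdiv; simpl. ring.
    simpl. unfold D. destruct df as [c d]. destruct (f x) as [a b]. unfold Re, Im in *; simpl in *.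
    unfold Cdiv, Cinv, Cmult, Copp; simpl.
    assert ((a * a - b * b) * ((a * a - b * b) * 1) + (a * b + b * a) * ((a * b + b * a) * 1) = (a*a+b*b)^2) as ->  by ring.
    field. intros E. apply D0. nra.
  - eapply is_derive_eqv; [apply (rd_opp _ _ _ (rd_mult _ _ _ _ _ B1 HI))| |].
    intros t; unfold D; simpl. unfold Cinv; simpl. unfold Re, Im, Rdiv; simpl. ring.
    simpl. unfold D. destruct df as [c d]. destruct (f x) as [a b]. unfold Re, Im in *; simpl in *.
    unfold Cdiv, Cinv, Cmult, Copp; simpl.
    assert ((a * a - b * b) * ((a * a - b * b) * 1) + (a * b + b * a) * ((a * b + b * a) * 1) = (a*a+b*b)^2) as ->  by ring.
    field. intros E. apply D0. nra.
Qed.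

End M_A.
Import M_A.

Module M_B.
Open Scope R_scope.

Fixpoint cs (f : nat -> C) (n : nat) : C :=
  match n with O => RtoC 0 | S m => Cplus (cs f m) (f m) end.

Lemma cs_ext f g n : (forall a, (a < n)%nat -> f a = g a) -> cs f n = cs g n.
Proof. induction n; intros H; simpl; auto. rewrite IHn by (intros; apply H; lia). rewrite H by lia; auto. Qed.

Lemma cs_Sl f n : cs f (S n) = Cplus (f 0%nat) (cs (fun a => f (S a)) n).
Proof. induction n; simpl in *. ring. rewrite IHn. ring. Qed.

Lemma cs_plus f g n : cs (fun a => Cplus (f a) (g a)) n = Cplus (cs f n) (cs g n).
Proof. induction n; simpl. ring. rewrite IHn; ring. Qed.

Lemma cs_minus f g n : cs (fun a => Cminus (f a) (g a)) n = Cminus (cs f n) (cs g n).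
Proof. induction n; simpl. ring. rewrite IHn; ring. Qed.

Lemma cs_scal c f n : cs (fun a => Cmult c (f a)) n = Cmult c (cs f n).
Proof. induction n; simpl. ring. rewrite IHn; ring. Qed.

Lemma cs_conj f n : cs (fun a => Cconj (f a)) n = Cconj (cs f n).
Proof. induction n; simpl. unfold Cconj; simpl. apply injective_projections; simpl; ring.
  rewrite IHn, Cplus_conj; auto. Qed.

Lemma cs_zero f n : (forall a, (a < n)%nat -> f a = RtoC 0) -> cs f n = RtoC 0.
Proof. induction n; intros H; simpl; auto. rewrite IHn, H by (intros; try apply H; lia). ring. Qed.

Lemma cs_rev f n : cs f n = cs (fun a => f (n - 1 - a)%nat) n.
Proof. induction n. reflexivity.
  rewrite (cs_Sl (fun a => f (S n - 1 - a)%nat)). change (cs f (S n)) with (Cplus (cs f n) (f n)). rewrite IHn. replace (S n - 1 - 0)%nat with n by lia.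
  rewrite Cplus_comm. f_equal. apply cs_ext. intros a Ha. f_equal. lia. Qed.

Lemma cs_swap f n m : cs (fun a => cs (fun b => f a b) m) n = cs (fun b => cs (fun a => f a b) n) m.
Proof. induction n; simpl.
  - symmetry; apply cs_zero; intros; reflexivity.
  - rewrite IHn. rewrite <- cs_plus. apply cs_ext; intros; reflexivity. Qed.

Lemma cs_single f n k : (k < n)%nat -> (forall a, (a < n)%nat -> a <> k -> f a = RtoC 0) -> cs f n = f k.
Proof. induction n; intros Hk H. lia. simpl.
  destruct (Nat.eq_dec k n) as [->|Hne].
  - rewrite cs_zero. ring. intros; apply H; lia.
  - rewrite IHn by (try lia; intros; apply H; lia). rewrite (H n) by lia. ring. Qed.

Open Scope C_scope.

Lemma Cconj_R (x : R) : Cconj (RtoC x) = RtoC x.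
Proof. unfold Cconj, RtoC; simpl. f_equal; ring. Qed.

Definition shift (p : nat -> C) (a : nat) : C := match a with O => RtoC 0 | S b => p b end.
Definition star (d : nat) (p : nat -> C) (a : nat) : C :=
  if Nat.leb a d then Cconj (p (d - a)%nat) else RtoC 0.
Definition e0 (a : nat) : C := if Nat.eqb a 0 then RtoC 1 else RtoC 0.
Definition deg (d : nat) (p : nat -> C) := forall a, (d < a)%nat -> p a = RtoC 0.

Section Toep.
Variable T : nat -> nat -> C.
Hypothesis TS : forall a b, T (S a) (S b) = T a b.
Hypothesis TH : forall a b, T b a = Cconj (T a b).

Definition L (d : nat) (p : nat -> C) (j : nat) : C := cs (fun a => p a * T a j) (S d).
Definition ip (d : nat) (p q : nat -> C) : C := cs (fun b => Cconj (q b) * L d p b) (S d).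
Definition Mq (d : nat) (p : nat -> C) : C := cs (fun a => p a * T (S a) 0%nat) (S d).

Lemma T_add a b k : T (a + k)%nat (b + k)%nat = T a b.
Proof. induction k. rewrite !Nat.add_0_r; auto. rewrite !Nat.add_succ_r, TS; auto. Qed.

Lemma L_ext d p j k : deg d p -> L (d + k) p j = L d p j.
Proof. intros Hd. induction k. rewrite Nat.add_0_r; auto.
  unfold L in *. rewrite Nat.add_succ_r. change (cs ?f (S (S ?n))) with (cs f (S n) + f (S n)).
  rewrite IHk, Hd by lia. ring. Qed.

Lemma L_ext' d d' p j : deg d p -> (d <= d')%nat -> L d' p j = L d p j.
Proof. intros H1 H2. replace d' with (d + (d' - d))%nat by lia. apply L_ext; auto. Qed.

Lemma L_shift d p j : L (S d) (shift p) (S j) = L d p j.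
Proof. unfold L. rewrite cs_Sl. simpl shift. rewrite Cmult_0_l, Cplus_0_l.
  apply cs_ext. intros a _. simpl. rewrite TS. auto. Qed.

Lemma L_shift0 d p : L (S d) (shift p) 0 = Mq d p.
Proof. unfold L, Mq. rewrite cs_Sl. simpl shift. rewrite Cmult_0_l, Cplus_0_l.
  apply cs_ext. intros a _. auto. Qed.

Lemma L_lin d p q c j : L d (fun a => p a - c * q a) j = L d p j - c * L d q j.
Proof. unfold L. rewrite <- cs_scal, <- cs_minus. apply cs_ext; intros; ring. Qed.

Lemma L_star d p j : (j <= d)%nat -> L d (star d p) j = Cconj (L d p (d - j)).
Proof. intros Hj. unfold L. rewrite <- cs_conj.
  rewrite cs_rev. apply cs_ext. intros a Ha. unfold star.
  replace (Nat.leb (S d - 1 - a) d) with true by (symmetry; apply Nat.leb_le; lia).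
  replace (d - (S d - 1 - a))%nat with a by lia.
  rewrite Cmult_conj. f_equal. rewrite <- TH.
  replace (S d - 1 - a)%nat with (d - a)%nat by lia.
  rewrite <- (T_add (d - a) j a). rewrite <- (T_add (d - j) a j).
  f_equal; lia. Qed.

Lemma L_starS d p : L d (star d p) (S d) = Cconj (Mq d p).
Proof. unfold L, Mq. rewrite <- cs_conj.
  rewrite cs_rev. apply cs_ext. intros a Ha. unfold star.
  replace (Nat.leb (S d - 1 - a) d) with true by (symmetry; apply Nat.leb_le; lia).
  replace (d - (S d - 1 - a))%nat with a by lia.
  rewrite Cmult_conj. f_equal. rewrite <- TH.
  replace (S d - 1 - a)%nat with (d - a)%nat by lia.
  rewrite <- (T_add (d - a) (S d) a). rewrite <- (T_add 0 (S a) d).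
  f_equal; lia. Qed.

Lemma deg_star d p : deg d (star d p).
Proof. intros a Ha. unfold star. replace (Nat.leb a d) with false by (symmetry; apply Nat.leb_gt; lia). auto. Qed.

Lemma ip_herm d p q : ip d p q = Cconj (ip d q p).
Proof. unfold ip, L. rewrite <- cs_conj.
  rewrite <- (cs_ext (fun b => cs (fun a => Cconj (q b) * (p a * T a b)) (S d))).
  2:{ intros b _. rewrite <- cs_scal. auto. }
  rewrite cs_swap. apply cs_ext. intros a _.
  rewrite <- cs_scal, <- cs_conj. apply cs_ext. intros b _.
  rewrite !Cmult_conj, Cconj_conj, (TH b a). ring. Qed.

End Toep.

Fixpoint Phi (T : nat -> nat -> C) (n : nat) : nat -> C :=
  match n with
  | O => e0
  | S m => let P := Phi T m in
      fun a => shift P a - (Mq T m P / L T m P m) * star m P a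
  end.
Definition Nn T n := L T n (Phi T n) n.
Definition ab T n := Mq T n (Phi T n) / Nn T n.

Lemma Phi_S T n a : Phi T (S n) a = shift (Phi T n) a - ab T n * star n (Phi T n) a.
Proof. reflexivity. Qed.

Lemma Phi_deg T n : deg n (Phi T n) /\ Phi T n n = RtoC 1.
Proof. induction n as [|n [IH1 IH2]].
  - split. intros a Ha. unfold e0, Phi. destruct a; [lia|reflexivity]. reflexivity.
  - split.
    + intros a Ha. rewrite Phi_S. rewrite (deg_star n (Phi T n) a) by lia.
      destruct a. lia. simpl. rewrite IH1 by lia. ring.
    + rewrite Phi_S, (deg_star n (Phi T n) (S n)) by lia. simpl. rewrite IH2. ring.
Qed.

Lemma Phi_0 T n : Phi T (S n) 0 = - ab T n.
Proof. rewrite Phi_S. simpl. unfold star. simpl. rewrite Nat.sub_0_r, (proj2 (Phi_deg T n)).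
  rewrite Cconj_R. ring. Qed.

Section Szego.
Variable T : nat -> nat -> C.
Hypothesis TS : forall a b, T (S a) (S b) = T a b.
Hypothesis TH : forall a b, T b a = Cconj (T a b).
Hypothesis TP : forall d p, deg d p -> (exists a, p a <> RtoC 0) -> 0 < Re (ip T d p p).

Definition Orth n := forall j, (j < n)%nat -> L T n (Phi T n) j = RtoC 0.

Lemma ip_Phi n : Orth n -> ip T n (Phi T n) (Phi T n) = Nn T n.
Proof. intros HO. unfold ip. rewrite (cs_single _ _ n) by (try lia; intros; rewrite HO by lia; ring).
  rewrite (proj2 (Phi_deg T n)). unfold Nn. rewrite Cconj_R. ring. Qed.

Lemma Nn_real n : Orth n -> Cconj (Nn T n) = Nn T n.
Proof. intros HO. rewrite <- ip_Phi by auto. rewrite <- ip_herm by auto. auto. Qed.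

Lemma Nn_pos n : Orth n -> 0 < Re (Nn T n).
Proof. intros HO. rewrite <- ip_Phi by auto. apply TP. apply Phi_deg.
  exists n. rewrite (proj2 (Phi_deg T n)). intros E. injection E. lra. Qed.

Lemma Nn_nz n : Orth n -> Nn T n <> RtoC 0.
Proof. intros HO E. pose proof (Nn_pos n HO). rewrite E in H. simpl in H. lra. Qed.

Lemma Orth_S n : Orth n -> Orth (S n).
Proof. intros HO j Hj.
  assert (E : L T (S n) (Phi T (S n)) j = L T (S n) (shift (Phi T n)) j - ab T n * L T n (star n (Phi T n)) j).
  { rewrite <- (L_ext' T n (S n) (star n (Phi T n))) by (try apply deg_star; lia).
    rewrite <- L_lin. unfold L. apply cs_ext. intros; rewrite Phi_S; auto. }
  rewrite E. destruct j as [|j].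
  - rewrite L_shift0, L_star by (auto; lia). rewrite Nat.sub_0_r.
    change (L T n (Phi T n) n) with (Nn T n). rewrite Nn_real by auto.
    unfold ab. field. apply Nn_nz; auto.
  - rewrite L_shift by auto. rewrite L_star by (auto; lia). rewrite !HO by lia.
    rewrite Cconj_R. ring.
Qed.

Lemma Orth_all n : Orth n.
Proof. induction n. intros j Hj; lia. apply Orth_S; auto. Qed.

Lemma Nn_S n : Nn T (S n) = Nn T n * (1 - ab T n * Cconj (ab T n)).
Proof.
  assert (E : L T (S n) (Phi T (S n)) (S n) = L T (S n) (shift (Phi T n)) (S n) - ab T n * L T n (star n (Phi T n)) (S n)).
  { rewrite <- (L_ext' T n (S n) (star n (Phi T n))) by (try apply deg_star; lia).
    rewrite <- L_lin. unfold L. apply cs_ext. intros; rewrite Phi_S; auto. }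
  unfold Nn at 1. rewrite E. rewrite L_shift, L_starS by auto.
  change (L T n (Phi T n) n) with (Nn T n).
  assert (HM : Mq T n (Phi T n) = ab T n * Nn T n).
  { unfold ab. field. apply Nn_nz, Orth_all. }
  rewrite HM, Cmult_conj, Nn_real by apply Orth_all. ring. Qed.

Lemma ab_lt1 n : Cmod (ab T n) < 1.
Proof.
  pose proof (Nn_pos (S n) (Orth_all (S n))) as H1.
  pose proof (Nn_pos n (Orth_all n)) as H2.
  pose proof (Nn_real n (Orth_all n)) as H3.
  rewrite Nn_S in H1. rewrite <- Cmod2_conj in H1.
  destruct (Nn T n) as [x y]. unfold Cconj in H3; simpl in *. injection H3; intros Hy.
  assert (y = 0) by lra. subst y.
  assert (0 < 1 - Cmod (ab T n) ^ 2) by nra.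
  pose proof (Cmod_ge_0 (ab T n)). nra. Qed.

End Szego.

End M_B.
Import M_B.

Module M_C.
Open Scope R_scope.

Definition cdx (f : R -> C) t := exists l, is_derive f t l.
Definition Dv (f : R -> C) t : C := (Derive (fun s => Re (f s)) t, Derive (fun s => Im (f s)) t).

Lemma Dv_correct f t l : is_derive f t l -> l = Dv f t.
Proof. intros H. unfold Dv. destruct l as [l1 l2].
  apply injective_projections; simpl; symmetry; apply is_derive_unique.
  apply (is_derive_Re _ _ _ H). apply (is_derive_Im _ _ _ H). Qed.

Lemma cdx_Dv f t : cdx f t -> is_derive f t (Dv f t).
Proof. intros [l H]. rewrite <- (Dv_correct _ _ _ H). auto. Qed.

Lemma cd_cs (f : R -> nat -> C) (df : nat -> C) t n :
  (forall a, (a < n)%nat -> is_derive (fun s => f s a) t (df a)) ->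
  is_derive (fun s => cs (f s) n) t (cs df n).
Proof. induction n; intros H; simpl.
  - apply cd_const.
  - apply cd_plus. apply IHn; intros; apply H; lia. apply H; lia. Qed.

Lemma cdx_cs (f : R -> nat -> C) t n :
  (forall a, (a < n)%nat -> cdx (fun s => f s a) t) -> cdx (fun s => cs (f s) n) t.
Proof. intros H. exists (cs (fun a => Dv (fun s => f s a) t) n). apply cd_cs.
  intros; apply cdx_Dv; auto. Qed.

Lemma cdx_const c t : cdx (fun _ => c) t.
Proof. eexists; apply cd_const. Qed.
Lemma cdx_plus f g t : cdx f t -> cdx g t -> cdx (fun s => Cplus (f s) (g s)) t.
Proof. intros [l1 H1] [l2 H2]; eexists; apply cd_plus; eauto. Qed.
Lemma cdx_minus f g t : cdx f t -> cdx g t -> cdx (fun s => Cminus (f s) (g s)) t.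
Proof. intros [l1 H1] [l2 H2]; eexists; apply cd_minus; eauto. Qed.
Lemma cdx_mult f g t : cdx f t -> cdx g t -> cdx (fun s => Cmult (f s) (g s)) t.
Proof. intros [l1 H1] [l2 H2]; eexists; apply cd_mult; eauto. Qed.
Lemma cdx_conj f t : cdx f t -> cdx (fun s => Cconj (f s)) t.
Proof. intros [l1 H1]; eexists; apply cd_conj; eauto. Qed.
Lemma cdx_div f g t : cdx f t -> cdx g t -> g t <> RtoC 0 -> cdx (fun s => Cdiv (f s) (g s)) t.
Proof. intros [l1 H1] [l2 H2] Hn. eexists. unfold Cdiv. apply cd_mult. eauto. apply cd_inv; eauto. Qed.

Lemma cs_opp f n : cs (fun a => Copp (f a)) n = Copp (cs f n).
Proof. induction n; simpl. ring. rewrite IHn; ring. Qed.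

Lemma L_add T d p q c j : L T d (fun a => Cplus (p a) (Cmult c (q a))) j = Cplus (L T d p j) (Cmult c (L T d q j)).
Proof. unfold L. rewrite <- cs_scal, <- cs_plus. apply cs_ext; intros; ring. Qed.

Lemma L_comb T d p q r c1 c2 c3 j :
  L T d (fun a => Cminus (Cminus (Copp (Cmult c1 (p a))) (Cmult c2 (q a))) (Cmult c3 (r a))) j =
  Cminus (Cminus (Copp (Cmult c1 (L T d p j))) (Cmult c2 (L T d q j))) (Cmult c3 (L T d r j)).
Proof. unfold L. rewrite <- !cs_scal, <- cs_opp, <- !cs_minus. apply cs_ext; intros; ring. Qed.

Lemma L_sub T d p q j : L T d (fun a => Cminus (p a) (q a)) j = Cminus (L T d p j) (L T d q j).
Proof. unfold L. rewrite <- !cs_minus. apply cs_ext; intros; ring. Qed.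

Section Flow.
Variable T : R -> nat -> nat -> C.
Hypothesis TS : forall t a b, T t (S a) (S b) = T t a b.
Hypothesis TH : forall t a b, T t b a = Cconj (T t a b).
Hypothesis TP : forall t d p, deg d p -> (exists a, p a <> RtoC 0) -> 0 < Re (ip (T t) d p p).
Hypothesis TD : forall t a b, is_derive (fun s => T s a b) t
   (Cminus (Cplus (T t (S a) b) (T t a (S b))) (Cmult (T t a b) (Cplus (T t 1%nat 0%nat) (T t 0%nat 1%nat)))).

Lemma cdx_T t a b : cdx (fun s => T s a b) t.
Proof. eexists; apply TD. Qed.

Lemma cdx_Phi n : forall a t, cdx (fun s => Phi (T s) n a) t.
Proof. induction n; intros a t.
  - simpl. apply cdx_const.
  - simpl. apply cdx_minus.
    + destruct a; simpl. apply cdx_const. apply IHn.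
    + apply cdx_mult. apply cdx_div.
      * unfold Mq. apply cdx_cs. intros; apply cdx_mult; [apply IHn|apply cdx_T].
      * unfold L. apply cdx_cs. intros; apply cdx_mult; [apply IHn|apply cdx_T].
      * apply (Nn_nz (T t)); auto. apply Orth_all; auto.
      * unfold star. destruct (Nat.leb a n). apply cdx_conj, IHn. apply cdx_const.
Qed.


Lemma is_derive_zero (f : R -> C) (t : R) (l : C) : (forall s, f s = RtoC 0) -> is_derive f t l -> l = RtoC 0.
Proof. intros Hf H. rewrite (Dv_correct _ _ _ H).
  symmetry. apply Dv_correct. eapply is_derive_ext. 2: apply (cd_const (RtoC 0) t).
  intros; simpl; rewrite Hf; auto. Qed.

Lemma is_derive_constv (f : R -> C) (t : R) (l c : C) : (forall s, f s = c) -> is_derive f t l -> l = RtoC 0.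
Proof. intros Hf H. rewrite (Dv_correct _ _ _ H).
  symmetry. apply Dv_correct. eapply is_derive_ext. 2: apply (cd_const c t).
  intros; simpl; rewrite Hf; auto. Qed.

Definition DPhi n t a := Dv (fun s => Phi (T s) n a) t.
Definition s0 t := Cplus (T t 1%nat 0%nat) (T t 0%nat 1%nat).

Lemma L_deriv n j t : is_derive (fun s => L (T s) n (Phi (T s) n) j) t
  (Cplus (L (T t) n (DPhi n t) j)
     (Cminus (Cplus (L (T t) (S n) (shift (Phi (T t) n)) j) (L (T t) n (Phi (T t) n) (S j)))
             (Cmult (L (T t) n (Phi (T t) n) j) (s0 t)))).
Proof.
  unfold L at 1. eapply is_derive_eqv.
  apply (cd_cs (fun s a => Cmult (Phi (T s) n a) (T s a j))).
  intros a _. apply cd_mult. apply cdx_Dv, cdx_Phi. apply TD.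
  intros; reflexivity.
  unfold L, s0. rewrite (cs_Sl (fun a => Cmult (shift _ a) _)). simpl shift.
  rewrite Cmult_0_l, Cplus_0_l.
  match goal with |- _ = Cplus _ (Cminus _ (Cmult ?x ?y)) => rewrite (Cmult_comm x y) end.
  rewrite <- cs_scal.
  rewrite <- !cs_plus, <- !cs_minus, <- !cs_plus. apply cs_ext. intros a _.
  change (Dv (fun t0 : R_AbsRing => Phi (T t0) n a) t) with (DPhi n t a). ring.
Qed.

Lemma Orth_t t n j : (j < n)%nat -> L (T t) n (Phi (T t) n) j = RtoC 0.
Proof. intros; apply (Orth_all (T t)); auto. Qed.

Lemma DPhi_high n t a : (n <= a)%nat -> DPhi n t a = RtoC 0.
Proof. intros Ha. unfold DPhi.
  apply (is_derive_constv (fun s => Phi (T s) n a) t _ (if Nat.eqb a n then RtoC 1 else RtoC 0)).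
  intros s. destruct (Nat.eqb_spec a n) as [->|Hne]. apply Phi_deg. apply Phi_deg. lia.
  apply cdx_Dv, cdx_Phi. Qed.

Lemma L_D n j t : (j < n)%nat -> L (T t) n (DPhi n t) j =
   Copp (Cplus (L (T t) (S n) (shift (Phi (T t) n)) j) (L (T t) n (Phi (T t) n) (S j))).
Proof. intros Hj.
  pose proof (is_derive_zero _ t _ (fun s => Orth_t s n j Hj) (L_deriv n j t)) as H.
  rewrite (Orth_t t n j Hj) in H.
  match goal with H : Cplus ?x ?y = _ |- _ => replace x with (Cminus (Cplus x y) y) by ring end.
  rewrite H. ring. Qed.

Lemma L_shiftPhi n j t : (j <= n)%nat -> L (T t) (S n) (shift (Phi (T t) n)) j =
  Cmult (ab (T t) n) (L (T t) n (star n (Phi (T t) n)) j).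
Proof. intros Hj.
  rewrite <- (L_ext' (T t) n (S n) (star n (Phi (T t) n))) by (try apply deg_star; lia).
  transitivity (L (T t) (S n) (fun a => Cplus (Phi (T t) (S n) a) (Cmult (ab (T t) n) (star n (Phi (T t) n) a))) j).
  { unfold L. apply cs_ext. intros a _. rewrite Phi_S. ring. }
  rewrite L_add. rewrite (Orth_t t (S n) j) by lia. ring. Qed.

Definition kk m t := Cminus (RtoC 1) (Cmult (ab (T t) m) (Cconj (ab (T t) m))).
Definition Rr m t a :=
  Cminus (Cminus (Copp (Cmult (kk m t) (Phi (T t) m a)))
     (Cmult (ab (T t) (S m)) (star (S m) (Phi (T t) (S m)) a)))
     (Cmult (Cmult (ab (T t) (S m)) (Cconj (ab (T t) m))) (Phi (T t) (S m) a)).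

Lemma DPhi_formula m t a : DPhi (S m) t a = Rr m t a.
Proof.
  set (E := fun a => Cminus (DPhi (S m) t a) (Rr m t a)).
  assert (Edeg : deg m E).
  { intros b Hb. unfold E. rewrite DPhi_high by lia. unfold Rr.
    destruct (Nat.eq_dec b (S m)) as [->|Hne].
    - rewrite (proj1 (Phi_deg (T t) m)) by lia. rewrite (proj2 (Phi_deg (T t) (S m))).
      unfold star. rewrite Nat.leb_refl, Nat.sub_diag, Phi_0, Copp_conj. ring.
    - rewrite (proj1 (Phi_deg (T t) m)) by lia. rewrite (proj1 (Phi_deg (T t) (S m))) by lia.
      rewrite (deg_star (S m)) by lia. ring. }
  assert (EL : forall j, (j <= m)%nat -> L (T t) (S m) E j = RtoC 0).
  { intros j Hj. unfold E. rewrite L_sub. rewrite L_D by lia. unfold Rr. rewrite L_comb.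
    rewrite L_shiftPhi by lia.
    rewrite (Orth_t t (S m) j) by lia.
    rewrite (L_ext' (T t) m (S m) (Phi (T t) m)) by (try apply Phi_deg; lia).
    destruct (Nat.eq_dec j m) as [->|Hne].
    - change (L (T t) (S m) (Phi (T t) (S m)) (S m)) with (Nn (T t) (S m)).
      change (L (T t) m (Phi (T t) m) m) with (Nn (T t) m).
      rewrite (Nn_S (T t)) by auto. unfold kk. ring.
    - rewrite (Orth_t t (S m) (S j)) by lia. rewrite (Orth_t t m j) by lia. ring. }
  assert (Hip : ip (T t) m E E = RtoC 0).
  { unfold ip. apply cs_zero. intros b Hb.
    rewrite <- (L_ext' (T t) m (S m) E) by (auto; lia). rewrite EL by lia. ring. }
  apply NNPP. intros Hne.
  assert (0 < Re (ip (T t) m E E)).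
  { apply TP; auto. exists a. unfold E. intros H0. apply Hne.
    apply (f_equal (fun z => Cplus z (Rr m t a))) in H0. rewrite Cplus_0_l in H0. rewrite <- H0. ring. }
  rewrite Hip in H. simpl in H. lra.
Qed.

Definition alph (t : R) (n : nat) : C := Cconj (ab (T t) n).

Lemma alpha_flow n t : is_derive (fun s => alph s n) t
   (Cmult (RtoC (1 - Cmod (alph t n) ^ 2))
          (Cminus (alph t (S n)) (alpha_prev (fun k s => alph s k) n t))).
Proof.
  pose proof (cdx_Dv _ t (cdx_Phi (S n) 0 t)) as H.
  change (Dv (fun s => Phi (T s) (S n) 0) t) with (DPhi (S n) t 0) in H.
  rewrite DPhi_formula in H.
  apply cd_opp, cd_conj in H.
  eapply is_derive_eqv. apply H.
  intros s. cbv beta. rewrite Phi_0. unfold alph. f_equal. ring.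
  unfold Rr, kk, alph. rewrite Phi_0.
  replace (star (S n) (Phi (T t) (S n)) 0) with (RtoC 1) by (unfold star; replace (Nat.leb 0 (S n)) with true by reflexivity; rewrite Nat.sub_0_r, (proj2 (Phi_deg (T t) (S n))); symmetry; apply Cconj_R).
  rewrite Cmod_conj.
  assert (Hk : RtoC (1 - Cmod (ab (T t) n) ^ 2) = Cminus (RtoC 1) (Cmult (ab (T t) n) (Cconj (ab (T t) n)))).
  { rewrite <- Cmod2_conj. unfold RtoC, Cminus, Cplus, Copp; simpl. f_equal; ring. }
  rewrite Hk. clear Hk.
  destruct n as [|m].
  - change (Phi (T t) 0 0) with (RtoC 1). simpl alpha_prev. replace (RtoC (-1)) with (Copp (RtoC 1)) by (unfold RtoC, Copp; simpl; f_equal; ring).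
    repeat (rewrite ?Copp_conj, ?Cminus_conj, ?Cplus_conj, ?Cmult_conj, ?Cconj_conj, ?Cconj_R).
    match goal with |- ?a = ?b => change (@eq C a b) end; ring.
  - simpl alpha_prev. rewrite Phi_0.
    repeat (rewrite ?Copp_conj, ?Cminus_conj, ?Cplus_conj, ?Cmult_conj, ?Cconj_conj, ?Cconj_R).
    match goal with |- ?a = ?b => change (@eq C a b) end; ring.
Qed.

Lemma alph_disk t n : Cmod (alph t n) < 1.
Proof. unfold alph. rewrite Cmod_conj. apply (ab_lt1 (T t)); auto. Qed.
End Flow.

End M_C.
Import M_C.

Module M_D.
Open Scope R_scope.

Lemma exp_mono a b : a <= b -> exp a <= exp b.
Proof. intros H. destruct (Rle_lt_or_eq_dec _ _ H) as [h|h]. apply Rlt_le, exp_increasing; auto. rewrite h; lra. Qed.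

Lemma exp_le_abs c u : Rmin 0 u <= c <= Rmax 0 u -> exp c <= exp (Rabs u).
Proof. intros [H1 H2]. apply exp_mono.
  destruct (Rle_dec 0 u) as [h|h].
  - rewrite Rmax_right in H2 by lra. rewrite Rabs_right by lra. lra.
  - rewrite Rmin_right in H1 by lra. rewrite Rmax_left in H2 by lra. rewrite Rabs_left by lra. lra. Qed.

Lemma abs_le_abs c u : Rmin 0 u <= c <= Rmax 0 u -> Rabs c <= Rabs u.
Proof. intros [H1 H2]. destruct (Rle_dec 0 u) as [h|h].
  - rewrite Rmax_right in H2 by lra. rewrite Rmin_left in H1 by lra. rewrite (Rabs_right u) by lra.
    rewrite Rabs_right by lra. lra.
  - rewrite Rmin_right in H1 by lra. rewrite Rmax_left in H2 by lra. rewrite (Rabs_left u) by lra.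
    unfold Rabs; destruct Rcase_abs; lra. Qed.

Lemma exp_m1_bound u : Rabs (exp u - 1) <= Rabs u * exp (Rabs u).
Proof.
  destruct (MVT_abs exp exp 0 u) as [c [Hr Hc]].
  { intros; apply derivable_pt_lim_exp. }
  rewrite exp_0 in Hr. rewrite Hr, Rminus_0_r.
  rewrite (Rabs_right (exp c)) by (apply Rle_ge, Rlt_le, exp_pos).
  rewrite Rmult_comm. apply Rmult_le_compat_l. apply Rabs_pos. apply exp_le_abs; auto.
Qed.

Lemma exp_m2_bound u : Rabs (exp u - 1 - u) <= u ^ 2 * exp (Rabs u).
Proof.
  destruct (MVT_abs (fun v => exp v - 1 - v) (fun v => exp v - 1) 0 u) as [c [Hr Hc]].
  { intros. apply is_derive_Reals. auto_derive; auto. ring. }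
  rewrite exp_0 in Hr. replace (1 - 1 - 0) with 0 in Hr by ring.
  rewrite Rminus_0_r, Rminus_0_r in Hr. rewrite Hr.
  pose proof (exp_m1_bound c).
  pose proof (abs_le_abs _ _ Hc). pose proof (exp_le_abs _ _ Hc).
  pose proof (Rabs_pos c). pose proof (Rabs_pos u). pose proof (exp_pos c).
  assert (Rabs c * exp (Rabs c) <= Rabs u * exp (Rabs u)).
  { apply Rmult_le_compat; auto. apply Rlt_le, exp_pos. apply exp_mono; auto. }
  replace (u ^ 2) with (Rabs u * Rabs u) by (rewrite <- Rabs_mult; simpl; rewrite Rmult_1_r; apply Rabs_right; nra).
  nra.
Qed.

Definition xk (k : nat) : R := (/2) ^ k.
Definition W (k : nat) (t : R) : R := exp (-15 * INR k - 2 * t * xk k).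
Definition q15 : R := exp (-15).

Lemma xk_pos k : 0 < xk k.
Proof. unfold xk. apply pow_lt. lra. Qed.
Lemma xk_le1 k : xk k <= 1.
Proof. unfold xk. induction k; simpl. lra. pose proof (xk_pos k). unfold xk in H. nra. Qed.
Lemma W_pos k t : 0 < W k t.
Proof. apply exp_pos. Qed.
Lemma exp_INR a k : exp (a * INR k) = (exp a) ^ k.
Proof. induction k. simpl. rewrite Rmult_0_r, exp_0; auto.
  rewrite S_INR, Rmult_plus_distr_l, Rmult_1_r, exp_plus, IHk. simpl. ring. Qed.
Lemma q15_bounds : 0 < q15 < 1 / 2.
Proof. unfold q15. split. apply exp_pos.
  pose proof (exp_ineq1_le 15). assert (exp 15 * exp (-15) = 1) by (rewrite <- exp_plus; replace (15 + -15) with 0 by ring; apply exp_0).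
  pose proof (exp_pos (-15)). nra. Qed.

Lemma W_le k t : W k t <= exp (2 * Rabs t) * q15 ^ k.
Proof. unfold W, q15. rewrite <- exp_INR, <- exp_plus. apply exp_mono.
  pose proof (xk_pos k). pose proof (xk_le1 k).
  assert (- t * xk k <= Rabs t). { destruct (Rle_dec 0 t). rewrite Rabs_right by lra. nra. rewrite Rabs_left by lra. nra. }
  lra. Qed.

Lemma ex_series_extR (a b : nat -> R) : (forall n, a n = b n) -> ex_series a -> ex_series b.
Proof. intros H1 H2. apply (ex_series_ext a b H1 H2). Qed.

Lemma Series_zero : Series (fun _ => 0) = 0.
Proof. rewrite (Series_ext _ (fun n => 0 * 1)) by (intros; ring). rewrite Series_scal_l. ring. Qed.

Lemma ex_series_minusR (a b : nat -> R) : ex_series a -> ex_series b -> ex_series (fun n => a n - b n).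
Proof. intros H1 H2. apply (ex_series_extR (fun n => plus (a n) (opp (b n)))). intros; reflexivity.
  apply (@ex_series_minus R_AbsRing R_NormedModule); auto. Qed.
Lemma ex_series_scalR (c : R) (a : nat -> R) : ex_series a -> ex_series (fun n => c * a n).
Proof. intros H1. apply (ex_series_extR (fun n => scal c (a n))). intros; reflexivity.
  apply (@ex_series_scal_l R_AbsRing R_NormedModule); auto. Qed.
Lemma ex_series_plusR (a b : nat -> R) : ex_series a -> ex_series b -> ex_series (fun n => a n + b n).
Proof. intros H1 H2. apply (ex_series_extR (fun n => plus (a n) (b n))). intros; reflexivity.
  apply (@ex_series_plus R_AbsRing R_NormedModule); auto. Qed.

Lemma ex_series_geomb (f : nat -> R) C : (forall k, Rabs (f k) <= C * q15 ^ k) -> ex_series f.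
Proof. intros H. apply ex_series_Rabs.
  apply (@ex_series_le R_AbsRing R_CompleteNormedModule) with (b := fun k => C * q15 ^ k).
  intros n. unfold norm; simpl. unfold abs; simpl. rewrite Rabs_Rabsolu. apply H.
  apply (@ex_series_scal_l R_AbsRing R_NormedModule C). apply ex_series_geom.
  pose proof q15_bounds. rewrite Rabs_right; lra. Qed.

Lemma ex_W (h : nat -> R) B t : (forall k, Rabs (h k) <= B) -> ex_series (fun k => W k t * h k).
Proof. intros H. apply ex_series_geomb with (C := exp (2 * Rabs t) * B).
  intros k. rewrite Rabs_mult, (Rabs_right (W k t)) by (apply Rle_ge, Rlt_le, W_pos).
  pose proof (W_le k t). pose proof (W_pos k t). pose proof (H k). pose proof (Rabs_pos (h k)).
  pose proof (exp_pos (2 * Rabs t)). pose proof (pow_lt q15 k (proj1 q15_bounds)).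
  replace (exp (2 * Rabs t) * B * q15 ^ k) with ((exp (2 * Rabs t) * q15 ^ k) * B) by ring.
  apply Rmult_le_compat; lra. Qed.

Lemma Series_abs_le (f g : nat -> R) : (forall k, Rabs (f k) <= g k) -> ex_series g -> Rabs (Series f) <= Series g.
Proof. intros H Hg. eapply Rle_trans. apply Series_Rabs.
  apply (@ex_series_le R_AbsRing R_CompleteNormedModule) with (b := g); auto.
  intros n. unfold norm; simpl. unfold abs; simpl. rewrite Rabs_Rabsolu. apply H.
  apply Series_le; auto. intros n; split. apply Rabs_pos. apply H. Qed.

Lemma W_shift k t u : W k (t + u) = W k t * exp (-2 * u * xk k).
Proof. unfold W. rewrite <- exp_plus. f_equal. ring. Qed.

Lemma W_deriv (h : nat -> R) B t : (forall k, Rabs (h k) <= B) ->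
  is_derive (fun s => Series (fun k => W k s * h k)) t (Series (fun k => W k t * (-2 * xk k * h k))).
Proof. intros HB. apply is_derive_Reals.
  set (Z := Series (fun k => W k t)).
  assert (HZ : ex_series (fun k => W k t)).
  { apply ex_series_extR with (fun k => W k t * 1). intros; ring. apply (ex_W _ 1). intros; rewrite Rabs_R1; lra. }
  assert (Hbnd : forall k, Rabs (-2 * xk k * h k) <= 2 * B).
  { intros k. rewrite !Rabs_mult. pose proof (xk_pos k). pose proof (xk_le1 k).
    rewrite (Rabs_left (-2)) by lra. rewrite (Rabs_right (xk k)) by lra. pose proof (HB k). pose proof (Rabs_pos (h k)). nra. }
  assert (B0 : 0 <= B). { pose proof (HB 0%nat). pose proof (Rabs_pos (h 0%nat)). lra. }
  assert (Z0 : 0 <= Z). { unfold Z. apply Rle_trans with (Series (fun _ => 0)).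
     rewrite Series_zero; lra. apply Series_le; auto. intros; split; [lra|apply Rlt_le, W_pos]. }
  assert (KEY : forall u, Rabs (Series (fun k => W k (t + u) * h k) - Series (fun k => W k t * h k)
           - u * Series (fun k => W k t * (-2 * xk k * h k))) <= B * Z * (4 * u ^ 2 * exp (2 * Rabs u))).
  { intros u.
    assert (E1 : ex_series (fun k => W k (t + u) * h k)) by (apply (ex_W _ B); auto).
    assert (E2 : ex_series (fun k => W k t * h k)) by (apply (ex_W _ B); auto).
    assert (E3 : ex_series (fun k => W k t * (-2 * xk k * h k))) by (apply (ex_W _ (2 * B)); auto).
    assert (EQ : Series (fun k => W k (t + u) * h k) - Series (fun k => W k t * h k)
           - u * Series (fun k => W k t * (-2 * xk k * h k)) =
           Series (fun k => W k (t + u) * h k - W k t * h k - u * (W k t * (-2 * xk k * h k)))).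
    { rewrite Series_minus, Series_minus, Series_scal_l; auto.
      apply ex_series_minusR; auto.
      apply ex_series_scalR; auto. }
    rewrite EQ. clear EQ.
    apply Rle_trans with (Series (fun k => (B * (4 * u ^ 2 * exp (2 * Rabs u))) * W k t)).
    2:{ rewrite Series_scal_l. unfold Z. right; ring. }
    apply Series_abs_le.
    2: apply ex_series_scalR; auto.
    intros k. rewrite W_shift.
    replace (W k t * exp (-2 * u * xk k) * h k - W k t * h k - u * (W k t * (-2 * xk k * h k)))
      with (W k t * h k * (exp (-2 * u * xk k) - 1 - (-2 * u * xk k))) by ring.
    rewrite !Rabs_mult. rewrite (Rabs_right (W k t)) by (apply Rle_ge, Rlt_le, W_pos).
    pose proof (exp_m2_bound (-2 * u * xk k)) as E.
    pose proof (xk_pos k). pose proof (xk_le1 k).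
    assert (Rabs (-2 * u * xk k) <= 2 * Rabs u).
    { rewrite !Rabs_mult, (Rabs_left (-2)), (Rabs_right (xk k)) by lra. pose proof (Rabs_pos u). nra. }
    assert (exp (Rabs (-2 * u * xk k)) <= exp (2 * Rabs u)) by (apply exp_mono; auto).
    assert ((-2 * u * xk k) ^ 2 <= 4 * u ^ 2).
    { replace ((-2 * u * xk k) ^ 2) with (4 * u^2 * (xk k)^2) by ring.
      assert (0 <= u ^ 2) by nra. assert (xk k ^ 2 <= 1) by nra. nra. }
    assert (Rabs (exp (-2 * u * xk k) - 1 - -2 * u * xk k) <= 4 * u ^ 2 * exp (2 * Rabs u)).
    { eapply Rle_trans. apply E. apply Rmult_le_compat; auto. nra. apply Rlt_le, exp_pos. }
    pose proof (HB k). pose proof (Rabs_pos (h k)). pose proof (W_pos k t).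
    pose proof (Rabs_pos (exp (-2 * u * xk k) - 1 - -2 * u * xk k)).
    replace (B * (4 * u ^ 2 * exp (2 * Rabs u)) * W k t) with (W k t * (B * (4 * u ^ 2 * exp (2 * Rabs u)))) by ring.
    rewrite Rmult_assoc. apply Rmult_le_compat_l. lra. apply Rmult_le_compat; auto. }
  intros eps Heps.
  set (K := B * Z * 4 * exp 2 + 1).
  assert (K0 : 0 < K) by (unfold K; pose proof (exp_pos 2); assert (0 <= B * Z * 4 * exp 2) by (repeat apply Rmult_le_pos; lra); lra).
  assert (D0 : 0 < Rmin 1 (eps / K)) by (apply Rmin_pos; [lra| apply Rdiv_lt_0_compat; lra]).
  exists (mkposreal _ D0). intros u Hu Hud. simpl in Hud.
  pose proof (Rmin_l 1 (eps / K)). pose proof (Rmin_r 1 (eps / K)).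
  pose proof (KEY u) as Ku.
  assert (Hu0 : 0 < Rabs u) by (apply Rabs_pos_lt; auto).
  replace ((Series (fun k => W k (t + u) * h k) - Series (fun k => W k t * h k)) / u -
      Series (fun k => W k t * (-2 * xk k * h k))) with
    ((Series (fun k => W k (t + u) * h k) - Series (fun k => W k t * h k)
           - u * Series (fun k => W k t * (-2 * xk k * h k))) / u) by (field; auto).
  unfold Rdiv. rewrite Rabs_mult, Rabs_inv.
  assert (exp (2 * Rabs u) <= exp 2) by (apply exp_mono; lra).
  assert (u ^ 2 = Rabs u * Rabs u) by (rewrite <- Rabs_mult; simpl; rewrite Rmult_1_r; rewrite Rabs_right; nra).
  apply Rle_lt_trans with (B * Z * (4 * u ^ 2 * exp (2 * Rabs u)) * / Rabs u).
  apply Rmult_le_compat_r. apply Rlt_le, Rinv_0_lt_compat; auto. auto.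
  rewrite H2. field_simplify; [|lra].
  apply Rle_lt_trans with (B * Z * 4 * exp 2 * Rabs u).
  { assert (0 <= B * Z) by nra. pose proof (exp_pos (2 * Rabs u)).
    replace (4 * B * Z * Rabs u * exp (2 * Rabs u)) with ((B * Z * 4 * Rabs u) * exp (2 * Rabs u)) by ring.
    replace (B * Z * 4 * exp 2 * Rabs u) with ((B * Z * 4 * Rabs u) * exp 2) by ring.
    apply Rmult_le_compat_l; auto. nra. }
  apply Rle_lt_trans with (K * Rabs u). unfold K. nra.
  assert (Rabs u < eps / K) by lra.
  apply Rmult_lt_compat_l with (r := K) in H3; auto.
  replace (K * (eps / K)) with eps in H3 by (field; lra). lra.
Qed.

End M_D.
Import M_D.

Module M_E.
Open Scope R_scope.

Definition bnd (g : nat -> C) := exists B, forall k, Cmod (g k) <= B.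

Definition WS (t : R) (g : nat -> C) : C :=
  (Series (fun k => W k t * Re (g k)), Series (fun k => W k t * Im (g k))).

Lemma bnd_Re g : bnd g -> exists B, forall k, Rabs (Re (g k)) <= B.
Proof. intros [B H]. exists B. intros k. eapply Rle_trans. apply re_le_Cmod. auto. Qed.
Lemma im_le_Cmod' c : Rabs (Im c) <= Cmod c.
Proof. destruct c as [a b]. unfold Cmod, Im; simpl. rewrite <- sqrt_Rsqr_abs.
  apply sqrt_le_1_alt. unfold Rsqr. nra. Qed.

Lemma bnd_Im g : bnd g -> exists B, forall k, Rabs (Im (g k)) <= B.
Proof. intros [B H]. exists B. intros k. eapply Rle_trans. apply im_le_Cmod'. auto. Qed.

Lemma exRe g t : bnd g -> ex_series (fun k => W k t * Re (g k)).
Proof. intros Hg. destruct (bnd_Re g Hg) as [B HB]. apply (ex_W _ B). auto. Qed.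
Lemma exIm g t : bnd g -> ex_series (fun k => W k t * Im (g k)).
Proof. intros Hg. destruct (bnd_Im g Hg) as [B HB]. apply (ex_W _ B). auto. Qed.

Lemma bnd_plus f g : bnd f -> bnd g -> bnd (fun k => Cplus (f k) (g k)).
Proof. intros [B1 H1] [B2 H2]. exists (B1 + B2). intros k. eapply Rle_trans. apply Cmod_triangle.
  specialize (H1 k); specialize (H2 k); lra. Qed.
Lemma bnd_mult f g : bnd f -> bnd g -> bnd (fun k => Cmult (f k) (g k)).
Proof. intros [B1 H1] [B2 H2]. exists (B1 * B2). intros k. rewrite Cmod_mult.
  apply Rmult_le_compat; auto; apply Cmod_ge_0. Qed.
Lemma bnd_const c : bnd (fun _ => c).
Proof. exists (Cmod c). intros; lra. Qed.
Lemma bnd_conj f : bnd f -> bnd (fun k => Cconj (f k)).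
Proof. intros [B H]. exists B. intros k. rewrite Cmod_conj. auto. Qed.
Lemma bnd_cs (f : nat -> nat -> C) n : (forall a, bnd (f a)) -> bnd (fun k => cs (fun a => f a k) n).
Proof. intros H. induction n; simpl. apply bnd_const. apply bnd_plus; auto. Qed.
Lemma bnd_ext f g : (forall k, f k = g k) -> bnd f -> bnd g.
Proof. intros E [B H]. exists B. intros k. rewrite <- E. auto. Qed.

Lemma WS_ext t f g : (forall k, f k = g k) -> WS t f = WS t g.
Proof. intros E. unfold WS. f_equal; apply Series_ext; intros k; rewrite E; auto. Qed.

Lemma WS_plus t f g : bnd f -> bnd g -> WS t (fun k => Cplus (f k) (g k)) = Cplus (WS t f) (WS t g).
Proof. intros Hf Hg. unfold WS, Cplus; simpl. f_equal.
  - rewrite <- Series_plus by (apply exRe; auto). apply Series_ext; intros; unfold Re, Im; simpl; ring.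
  - rewrite <- Series_plus by (apply exIm; auto). apply Series_ext; intros; unfold Re, Im; simpl; ring. Qed.

Lemma WS_scal t c g : bnd g -> WS t (fun k => Cmult c (g k)) = Cmult c (WS t g).
Proof. intros Hg. unfold WS, Cmult; simpl. f_equal.
  - rewrite <- !Series_scal_l, <- Series_minus. apply Series_ext; intros; unfold Re, Im; simpl; ring.
    apply ex_series_scalR, exRe; auto. apply ex_series_scalR, exIm; auto.
  - rewrite <- !Series_scal_l, <- Series_plus. apply Series_ext; intros; unfold Re, Im; simpl; ring.
    apply ex_series_scalR, exIm; auto. apply ex_series_scalR, exRe; auto. Qed.

Lemma WS_conj t g : WS t (fun k => Cconj (g k)) = Cconj (WS t g).
Proof. unfold WS, Cconj; simpl. f_equal. rewrite <- Series_opp. apply Series_ext; intros; unfold Im; ring. Qed.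

Lemma WS_cs t (f : nat -> nat -> C) n : (forall a, bnd (f a)) ->
  WS t (fun k => cs (fun a => f a k) n) = cs (fun a => WS t (f a)) n.
Proof. intros H. induction n; simpl.
  - unfold WS. simpl. rewrite (Series_ext _ (fun _ => 0)) by (intros; ring). rewrite Series_zero.
    reflexivity.
  - rewrite WS_plus. rewrite IHn; auto. apply bnd_cs; auto. auto. Qed.

Lemma WS_deriv g t : bnd g -> is_derive (fun s => WS s g) t (WS t (fun k => Cmult (RtoC (-2 * xk k)) (g k))).
Proof. intros Hg. destruct (bnd_Re g Hg) as [B1 H1]. destruct (bnd_Im g Hg) as [B2 H2].
  apply is_derive_C_of.
  - eapply is_derive_eqv. apply (W_deriv _ B1 t H1). intros; reflexivity.
    unfold WS; simpl. apply Series_ext; intros; unfold Re, Im; simpl; ring.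
  - eapply is_derive_eqv. apply (W_deriv _ B2 t H2). intros; reflexivity.
    unfold WS; simpl. apply Series_ext; intros; unfold Re, Im; simpl; ring.
Qed.

End M_E.
Import M_E.

Module M_F.
Open Scope R_scope.

Lemma Series_ge_term (a : nat -> R) j : (forall k, 0 <= a k) -> ex_series a -> a j <= Series a.
Proof. intros Hp He. rewrite (Series_incr_n a (S j)) by (auto; lia). simpl pred.
  assert (a j <= sum_f_R0 a j).
  { destruct j. simpl; lra. rewrite tech5. pose proof (cond_pos_sum a j Hp). lra. }
  assert (0 <= Series (fun k => a (S j + k)%nat)).
  { rewrite <- Series_zero. apply Series_le. intros; split; [lra|auto].
    apply (proj1 (ex_series_incr_n a (S j))) in He. exact He. }
  lra. Qed.

Definition yk k := sqrt (1 - xk k ^ 2).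
Definition zeta (k : nat) : C := (- xk k, (-1) ^ k * yk k).

Lemma yk_sq k : yk k ^ 2 = 1 - xk k ^ 2.
Proof. unfold yk. replace (sqrt (1 - xk k ^ 2) ^ 2) with (sqrt (1 - xk k ^ 2) * sqrt (1 - xk k ^ 2)) by ring.
  apply sqrt_sqrt.
  pose proof (xk_pos k); pose proof (xk_le1 k). nra. Qed.

Lemma m1_sq k : ((-1) ^ k) ^ 2 = 1.
Proof. rewrite <- pow_mult. rewrite Nat.mul_comm, pow_mult. simpl. replace (-1 * (-1 * 1)) with 1 by ring. apply pow1. Qed.

Lemma zeta_unit k : Cmult (zeta k) (Cconj (zeta k)) = RtoC 1.
Proof. unfold zeta, Cmult, Cconj, RtoC; simpl. pose proof (yk_sq k). pose proof (m1_sq k). f_equal; nra. Qed.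

Lemma zeta_sum k : Cplus (zeta k) (Cconj (zeta k)) = RtoC (-2 * xk k).
Proof. unfold zeta, Cplus, Cconj, RtoC; simpl. f_equal; ring. Qed.

Lemma Cmod_zeta k : Cmod (zeta k) = 1.
Proof. assert (E : RtoC (Cmod (zeta k) ^ 2) = RtoC 1).
  { rewrite Cmod2_conj. rewrite zeta_unit. reflexivity. }
  injection E; intros H.
  pose proof (Cmod_ge_0 (zeta k)). nra. Qed.

Definition G (a b : nat) (k : nat) : C := Cmult (Cpow (zeta k) a) (Cpow (Cconj (zeta k)) b).

Lemma bnd_G a b : bnd (G a b).
Proof. exists 1. intros k. unfold G. rewrite Cmod_mult, !Cmod_pow, Cmod_conj, Cmod_zeta, !pow1. lra. Qed.

Definition Zt t := WS t (fun _ => RtoC 1).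
Definition Tm (t : R) (a b : nat) : C := Cdiv (WS t (G a b)) (Zt t).

Lemma Zt_Im t : Im (Zt t) = 0.
Proof. unfold Zt, WS, Im; simpl. rewrite (Series_ext _ (fun _ => 0)) by (intros; ring). apply Series_zero. Qed.

Lemma Zt_Re_pos t : 0 < Re (Zt t).
Proof. unfold Zt, WS, Re; simpl.
  apply Rlt_le_trans with (W 0 t * 1). rewrite Rmult_1_r; apply W_pos.
  apply (Series_ge_term (fun k => W k t * 1) 0).
  intros; rewrite Rmult_1_r; apply Rlt_le, W_pos.
  apply (ex_W _ 1). intros; rewrite Rabs_R1; lra. Qed.

Lemma Zt_nz t : Zt t <> RtoC 0.
Proof. intros E. pose proof (Zt_Re_pos t). rewrite E in H. simpl in H. lra. Qed.

Lemma Zt_conj t : Cconj (Zt t) = Zt t.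
Proof. pose proof (Zt_Im t). destruct (Zt t) as [x y]. unfold Im in H; simpl in H. subst.
  unfold Cconj; simpl. f_equal; ring. Qed.

Lemma Tm_S t a b : Tm t (S a) (S b) = Tm t a b.
Proof. unfold Tm. f_equal. apply WS_ext. intros k. unfold G. simpl.
  transitivity (Cmult (Cmult (Cpow (zeta k) a) (Cpow (Cconj (zeta k)) b)) (Cmult (zeta k) (Cconj (zeta k)))).
  ring. rewrite zeta_unit. ring. Qed.

Lemma Tm_H t a b : Tm t b a = Cconj (Tm t a b).
Proof. unfold Tm. rewrite Cdiv_conj by apply Zt_nz. rewrite Zt_conj. f_equal.
  rewrite <- WS_conj. apply WS_ext. intros k. unfold G.
  rewrite Cmult_conj, !Cpow_conj, Cconj_conj. ring. Qed.

Lemma G_deriv a b k : Cmult (RtoC (-2 * xk k)) (G a b k) = Cplus (G (S a) b k) (G a (S b) k).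
Proof. unfold G. rewrite <- zeta_sum. simpl. ring. Qed.

Lemma Tm_D t a b : is_derive (fun s => Tm s a b) t
   (Cminus (Cplus (Tm t (S a) b) (Tm t a (S b))) (Cmult (Tm t a b) (Cplus (Tm t 1%nat 0%nat) (Tm t 0%nat 1%nat)))).
Proof.
  unfold Tm, Cdiv. eapply is_derive_eqv.
  apply cd_mult. apply WS_deriv, bnd_G. apply cd_inv. apply WS_deriv, bnd_const. apply Zt_nz.
  intros; reflexivity.
  rewrite (WS_ext t _ _ (G_deriv a b)).
  rewrite (WS_ext t (fun k => Cmult (RtoC (-2 * xk k)) (RtoC 1)) (fun k => Cplus (G 1 0 k) (G 0 1 k))).
  2:{ intros k. rewrite <- G_deriv. unfold G. simpl. ring. }
  rewrite !WS_plus by apply bnd_G.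
  fold (Zt t). match goal with |- ?a = ?b => change (@eq C a b) end. field. apply Zt_nz.
Qed.

End M_F.
Import M_F.

Module M_R1.
Open Scope R_scope.

Definition ev (p : nat -> C) (n : nat) (x : C) : C := cs (fun a => Cmult (p a) (Cpow x a)) n.

Lemma roots (z : nat -> C) d : (forall i j, (i <= d)%nat -> (j <= d)%nat -> z i = z j -> i = j) ->
  forall p, deg d p -> (forall k, (k <= d)%nat -> ev p (S d) (z k) = RtoC 0) -> forall a, p a = RtoC 0.
Proof.
  induction d as [|d IH]; intros Hz p Hd Hr a.
  - destruct a. specialize (Hr 0%nat (le_n 0)). unfold ev in Hr. simpl in Hr.
    rewrite <- Hr. ring. apply Hd. lia.
  - set (zz := z (S d)).
    set (qq := fun a => cs (fun i => Cmult (p (a + i)%nat) (Cpow zz i)) (S (S d) - a)).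
    assert (Hi : forall a, (a <= S d)%nat -> qq a = Cplus (p a) (Cmult zz (qq (S a)))).
    { intros b Hb. unfold qq. replace (S (S d) - b)%nat with (S (S d - b)) by lia.
      rewrite cs_Sl. replace (S (S d) - S b)%nat with (S d - b)%nat by lia.
      rewrite <- cs_scal. rewrite Nat.add_0_r. simpl Cpow. f_equal. ring.
      apply cs_ext. intros i _. rewrite Nat.add_succ_r. simpl. ring. }
    set (q := fun a => qq (S a)).
    assert (Hqd : deg d q).
    { intros b Hb. unfold q, qq. replace (S (S d) - S b)%nat with 0%nat by lia. reflexivity. }
    assert (Hq0 : qq (S (S d)) = RtoC 0).
    { unfold qq. replace (S (S d) - S (S d))%nat with 0%nat by lia. reflexivity. }
    assert (Hev : forall x, ev p (S (S d)) x = Cplus (qq 0%nat) (Cmult (Cminus x zz) (ev q (S d) x))).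
    { intros x. unfold ev.
      rewrite (cs_ext _ (fun a => Cminus (Cmult (qq a) (Cpow x a)) (Cmult zz (Cmult (q a) (Cpow x a))))).
      2:{ intros b Hb. rewrite (Hi b) by lia. unfold q. ring. }
      rewrite cs_minus, cs_scal.
      rewrite (cs_Sl (fun a => Cmult (qq a) (Cpow x a))).
      change (cs (fun a => Cmult (q a) (Cpow x a)) (S (S d))) with
        (Cplus (cs (fun a => Cmult (q a) (Cpow x a)) (S d)) (Cmult (q (S d)) (Cpow x (S d)))).
      change (q (S d)) with (qq (S (S d))). rewrite Hq0.
      rewrite (cs_ext (fun a => Cmult (qq (S a)) (Cpow x (S a))) (fun a => Cmult x (Cmult (q a) (Cpow x a)))).
      2:{ intros; unfold q; simpl; ring. }
      rewrite cs_scal. simpl Cpow. ring. }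
    assert (Hqq0 : qq 0%nat = RtoC 0).
    { specialize (Hr (S d) (le_n _)). rewrite Hev in Hr. fold zz in Hr.
      replace (Cminus zz zz) with (RtoC 0) in Hr by ring. rewrite <- Hr. ring. }
    assert (Hq : forall a, q a = RtoC 0).
    { apply (IH (fun i j Hi Hj => Hz i j ltac:(lia) ltac:(lia))); auto.
      intros k Hk. specialize (Hr k ltac:(lia)). rewrite Hev, Hqq0 in Hr.
      assert (Hne : Cminus (z k) zz <> RtoC 0).
      { intros E. assert (z k = zz). { replace (z k) with (Cplus (Cminus (z k) zz) zz) by ring. rewrite E. ring. }
        apply Hz in H; lia. }
      assert (H0 : Cmult (Cminus (z k) zz) (ev q (S d) (z k)) = RtoC 0) by (rewrite <- Hr; ring).
      replace (ev q (S d) (z k)) with (Cmult (Cinv (Cminus (z k) zz)) (Cmult (Cminus (z k) zz) (ev q (S d) (z k)))) by (field; auto).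
      rewrite H0. ring. }
    destruct (Compare_dec.le_lt_dec a (S d)) as [Ha|Ha].
    + destruct a.
      * assert (p 0%nat = Cminus (qq 0%nat) (Cmult zz (q 0%nat))). { rewrite Hi by lia. unfold q. ring. }
        rewrite H, Hqq0, Hq. ring.
      * assert (p (S a) = Cminus (q a) (Cmult zz (q (S a)))). { unfold q. rewrite (Hi (S a)) by lia. ring. }
        rewrite H, !Hq. ring.
    + apply Hd; auto.
Qed.

Lemma xk_lt i j : (i < j)%nat -> xk j < xk i.
Proof. intros H. unfold xk. replace j with (i + (j - i))%nat by lia. rewrite pow_add.
  pose proof (pow_lt (/2) i ltac:(lra)).
  assert ((/2) ^ (j - i) < 1). { apply pow_lt_1_compat. lra. lia. }
  nra. Qed.

Lemma zeta_inj i j : zeta i = zeta j -> i = j.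
Proof. intros E. unfold zeta in E. injection E; intros _ E1.
  destruct (Nat.lt_trichotomy i j) as [h|[h|h]]; auto.
  - pose proof (xk_lt _ _ h). lra.
  - pose proof (xk_lt _ _ h). lra. Qed.

Lemma cs_mult f g n m : Cmult (cs f n) (cs g m) = cs (fun b => cs (fun a => Cmult (f a) (g b)) n) m.
Proof. rewrite <- cs_scal. apply cs_ext. intros b _.
  rewrite Cmult_comm, <- cs_scal. apply cs_ext. intros; ring. Qed.

Lemma ip_Tm t d p : ip (Tm t) d p p =
  Cdiv (WS t (fun k => Cmult (ev p (S d) (zeta k)) (Cconj (ev p (S d) (zeta k))))) (Zt t).
Proof.
  rewrite (WS_ext t _ (fun k => cs (fun b => cs (fun a => Cmult (Cmult (Cconj (p b)) (p a)) (G a b k)) (S d)) (S d))).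
  2:{ intros k. unfold ev. rewrite <- cs_conj. rewrite cs_mult. apply cs_ext; intros b _. apply cs_ext; intros a _.
      unfold G. rewrite Cmult_conj, Cpow_conj. ring. }
  rewrite WS_cs.
  2:{ intros b. apply bnd_cs. intros a. apply bnd_mult. apply bnd_const. apply bnd_G. }
  unfold ip, Cdiv. rewrite Cmult_comm, <- cs_scal. apply cs_ext. intros b _.
  rewrite WS_cs by (intros a; apply bnd_mult; [apply bnd_const|apply bnd_G]).
  unfold L. rewrite <- cs_scal, <- cs_scal. apply cs_ext. intros a _.
  rewrite WS_scal by apply bnd_G. unfold Tm, Cdiv. ring. Qed.

Lemma Tm_pos t d p : deg d p -> (exists a, p a <> RtoC 0) -> 0 < Re (ip (Tm t) d p p).
Proof. intros Hd [a Ha].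
  assert (Hk : exists k, (k <= d)%nat /\ ev p (S d) (zeta k) <> RtoC 0).
  { apply NNPP. intros Hn. apply Ha. apply (roots zeta d); auto.
    intros i j _ _; apply zeta_inj.
    intros k Hk. apply NNPP. intros Hne. apply Hn. exists k; auto. }
  destruct Hk as [k [_ Hk]].
  rewrite ip_Tm.
  pose proof (Zt_Re_pos t) as HZ. pose proof (Zt_Im t) as HZi.
  set (g := fun k => Cmult (ev p (S d) (zeta k)) (Cconj (ev p (S d) (zeta k)))).
  assert (Hg : forall k, Re (g k) = Cmod (ev p (S d) (zeta k)) ^ 2).
  { intros j. unfold g. rewrite <- Cmod2_conj. reflexivity. }
  assert (HW : 0 < Re (WS t g)).
  { unfold WS, Re at 1; simpl.
    apply Rlt_le_trans with (W k t * Re (g k)).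
    - apply Rmult_lt_0_compat. apply W_pos. rewrite Hg. 
      assert (0 < Cmod (ev p (S d) (zeta k))). { apply Cmod_gt_0. auto. }
      nra.
    - apply (Series_ge_term (fun k => W k t * Re (g k)) k).
      intros j. rewrite Hg. pose proof (W_pos j t). pose proof (pow2_ge_0 (Cmod (ev p (S d) (zeta j)))). nra.
      apply exRe. unfold g. apply bnd_ext with (fun k => Cmult (ev p (S d) (zeta k)) (Cconj (ev p (S d) (zeta k)))). auto.
      apply bnd_mult. unfold ev. apply bnd_cs. intros b. apply bnd_mult. apply bnd_const.
      exists 1. intros j. rewrite Cmod_pow, Cmod_zeta, pow1. lra.
      apply bnd_conj. unfold ev. apply bnd_cs. intros b. apply bnd_mult. apply bnd_const.
      exists 1. intros j. rewrite Cmod_pow, Cmod_zeta, pow1. lra. }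
  destruct (WS t g) as [u v]. destruct (Zt t) as [z w]. unfold Re, Im in *; simpl in *. subst w.
  unfold Cdiv, Cinv, Cmult; simpl. 
  replace (u * (z / (z * (z * 1) + 0 * (0 * 1))) - v * (- 0 / (z * (z * 1) + 0 * (0 * 1)))) with (u / z) by (field; lra).
  apply Rdiv_lt_0_compat; lra.
Qed.

End M_R1.
Import M_R1.

Module M_O.
Open Scope R_scope.

Definition tj (j : nat) : R := 10 * 2 ^ j.
Definition q5 : R := exp (-5).

Lemma q5_bounds : 0 < q5 <= 1/32.
Proof. unfold q5. split. apply exp_pos.
  replace (-5) with (-1 * INR 5) by (simpl; ring). rewrite exp_INR.
  pose proof (exp_ineq1_le 1). assert (exp 1 * exp (-1) = 1) by (rewrite <- exp_plus; replace (1 + -1) with 0 by ring; apply exp_0).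
  pose proof (exp_pos (-1)). assert (exp (-1) <= 1/2) by nra.
  replace (1/32) with ((1/2)^5) by (simpl; field).
  apply pow_incr. lra. Qed.

Lemma pow2_ge m : 1 + INR m <= 2 ^ m.
Proof. induction m. simpl; lra. rewrite S_INR. change (2 ^ S m) with (2 * 2 ^ m). pose proof (pos_INR m). lra. Qed.

Lemma half_pow_ge0 m : 0 <= (/2) ^ m.
Proof. apply pow_le; lra. Qed.

Lemma W_right j m : W (j + m) (tj j) <= W j (tj j) * q5 ^ m.
Proof. unfold W, tj, q5, xk. rewrite <- exp_INR, <- exp_plus. apply exp_mono.
  rewrite plus_INR, pow_add.
  assert (E : 2 ^ j * (/ 2) ^ j = 1). { rewrite <- Rpow_mult_distr. replace (2 * /2) with 1 by field. apply pow1. }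
  assert (E2 : -2 * (10 * 2 ^ j) * ((/2) ^ j * (/2) ^ m) = -20 * (/2)^m).
  { transitivity (-20 * (2 ^ j * (/2) ^ j) * (/2)^m). ring. rewrite E. ring. }
  assert (E3 : -2 * (10 * 2 ^ j) * ((/2) ^ j) = -20).
  { transitivity (-20 * (2 ^ j * (/2) ^ j)). ring. rewrite E. ring. }
  replace (-15 * (INR j + INR m) - 2 * (10 * 2 ^ j) * ((/ 2) ^ j * (/ 2) ^ m))
    with (-15 * (INR j + INR m) + -2 * (10 * 2 ^ j) * ((/ 2) ^ j * (/ 2) ^ m)) by ring.
  rewrite E2.
  replace (-15 * INR j - 2 * (10 * 2 ^ j) * (/ 2) ^ j + -5 * INR m) with
     (-15 * INR j + -2 * (10 * 2 ^ j) * (/ 2) ^ j + -5 * INR m) by ring.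
  rewrite E3.
  destruct m as [|[|m]].
  - simpl. lra.
  - simpl. lra.
  - pose proof (half_pow_ge0 (S (S m))). rewrite !S_INR. pose proof (pos_INR m). lra.
Qed.

Lemma W_left k m : W k (tj (k + S m)) <= W (k + S m) (tj (k + S m)) * q5 ^ (S m).
Proof. unfold W, tj, q5, xk. rewrite <- exp_INR, <- exp_plus. apply exp_mono.
  rewrite plus_INR, !pow_add.
  assert (E : 2 ^ k * (/ 2) ^ k = 1). { rewrite <- Rpow_mult_distr. replace (2 * /2) with 1 by field. apply pow1. }
  assert (E1 : 2 ^ S m * (/ 2) ^ S m = 1). { rewrite <- Rpow_mult_distr. replace (2 * /2) with 1 by field. apply pow1. }
  assert (E2 : 2 * (10 * (2 ^ k * 2 ^ S m)) * (/2) ^ k = 20 * 2 ^ S m).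
  { transitivity (20 * (2 ^ k * (/2) ^ k) * 2 ^ S m). ring. rewrite E. ring. }
  assert (E3 : 2 * (10 * (2 ^ k * 2 ^ S m)) * ((/2) ^ k * (/2) ^ S m) = 20).
  { transitivity (20 * (2 ^ k * (/2) ^ k) * (2 ^ S m * (/2) ^ S m)). ring. rewrite E, E1. ring. }
  rewrite E2, E3. pose proof (pow2_ge (S m)). rewrite S_INR in *. lra.
Qed.

Lemma fin_geom q i : 0 <= q < 1 -> sum_f_R0 (fun k => q ^ (S i - k)) i <= q / (1 - q).
Proof. intros Hq. induction i.
  - simpl. apply Rmult_le_reg_r with (1 - q). lra. field_simplify; [|lra]. nra.
  - rewrite tech5. replace (S (S i) - S i)%nat with 1%nat by lia.
    rewrite (sum_eq _ (fun k => q ^ (S i - k) * q)).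
    2:{ intros k Hk. replace (S (S i) - k)%nat with (S (S i - k)) by lia. simpl; ring. }
    rewrite <- scal_sum. 
    assert (sum_f_R0 (fun k => q ^ (S i - k)) i * q <= q / (1 - q) * q) by (apply Rmult_le_compat_r; lra).
    assert (q / (1 - q) * q + q = q / (1 - q)) by (field; lra). rewrite pow_1. lra.
Qed.

Lemma Ssum_bound j : (0 < j)%nat -> Series (fun k => W k (tj j)) <= W j (tj j) * ((1 + q5) / (1 - q5)).
Proof. intros Hj. pose proof q5_bounds as Hq.
  assert (HZ : ex_series (fun k => W k (tj j))).
  { apply ex_series_extR with (fun k => W k (tj j) * 1). intros; ring. apply (ex_W _ 1). intros; rewrite Rabs_R1; lra. }
  rewrite (Series_incr_n _ j Hj HZ).
  destruct j as [|i]. lia. simpl pred.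
  assert (Htail : Series (fun k => W (S i + k) (tj (S i))) <= W (S i) (tj (S i)) * / (1 - q5)).
  { rewrite <- (is_series_unique _ _ (is_series_geom q5 ltac:(rewrite Rabs_right; lra))).
    rewrite <- Series_scal_l. apply Series_le.
    intros m. split. apply Rlt_le, W_pos. apply W_right.
    apply ex_series_scalR. apply ex_series_geom. rewrite Rabs_right; lra. }
  assert (Hhead : sum_f_R0 (fun k => W k (tj (S i))) i <= W (S i) (tj (S i)) * (q5 / (1 - q5))).
  { apply Rle_trans with (sum_f_R0 (fun k => W (S i) (tj (S i)) * q5 ^ (S i - k)) i).
    - apply sum_Rle. intros k Hk.
      pose proof (W_left k (i - k)) as H. replace (k + S (i - k))%nat with (S i) in H by lia.
      replace (S i - k)%nat with (S (i - k)) by lia. exact H.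
    - rewrite (sum_eq _ (fun k => q5 ^ (S i - k) * W (S i) (tj (S i)))) by (intros; ring).
      rewrite <- scal_sum. apply Rmult_le_compat_l. apply Rlt_le, W_pos.
      apply fin_geom. lra. }
  replace (W (S i) (tj (S i)) * ((1 + q5) / (1 - q5))) with
    (W (S i) (tj (S i)) * (q5 / (1 - q5)) + W (S i) (tj (S i)) * / (1 - q5)) by (field; lra).
  lra.
Qed.

Lemma Tm00 t : Tm t 0 0 = RtoC 1.
Proof. unfold Tm. rewrite (WS_ext t (G 0 0) (fun _ => RtoC 1)).
  fold (Zt t). field. apply Zt_nz. intros k. unfold G. simpl. ring. Qed.

Lemma alph0 t : alph Tm t 0 = Cconj (Tm t 1 0).
Proof. unfold alph, ab, Mq, Nn, L. simpl. unfold e0. simpl. rewrite Tm00. f_equal. field.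
  all: try (intros E; injection E; lra). Qed.

Lemma Im_alph0 t : Im (alph Tm t 0) =
  - Series (fun k => W k t * ((-1) ^ k * yk k)) / Series (fun k => W k t).
Proof. rewrite alph0. unfold Tm.
  pose proof (Zt_Im t) as HI. pose proof (Zt_Re_pos t) as HR.
  assert (EZ : Re (Zt t) = Series (fun k => W k t)).
  { unfold Zt, WS, Re; simpl. apply Series_ext; intros; ring. }
  assert (EN : Im (WS t (G 1 0)) = Series (fun k => W k t * ((-1) ^ k * yk k))).
  { unfold WS, Im; simpl. apply Series_ext; intros k. unfold G, zeta; simpl. ring. }
  rewrite <- EZ, <- EN. destruct (WS t (G 1 0)) as [u v]. destruct (Zt t) as [z w].
  unfold Re, Im in *; simpl in *. subst w.
  unfold Cdiv, Cinv, Cmult, Cconj; simpl. field. lra. Qed.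

Lemma yk_bounds k : 0 <= yk k <= 1.
Proof. split. unfold yk; apply sqrt_pos. pose proof (yk_sq k). pose proof (xk_pos k).
  assert (0 <= yk k) by (unfold yk; apply sqrt_pos). nra. Qed.

Lemma yk_ge j : (0 < j)%nat -> 4/5 <= yk j.
Proof. intros Hj. pose proof (yk_sq j). pose proof (yk_bounds j).
  assert (xk j <= 1/2). { destruct j. lia. unfold xk. simpl. pose proof (xk_le1 j). unfold xk in H1.
    pose proof (xk_pos j). unfold xk in H2. nra. }
  pose proof (xk_pos j). nra. Qed.

Lemma m1_abs k : (-1) ^ k = 1 \/ (-1) ^ k = -1.
Proof. induction k. left; reflexivity. simpl. destruct IHk as [-> | ->]; [right|left]; ring. Qed.

Lemma osc j : (0 < j)%nat -> (-1) ^ j * Im (alph Tm (tj j) 0) <= - 1/2.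
Proof. intros Hj. rewrite Im_alph0. set (t := tj j).
  set (S := Series (fun k => W k t)). set (N := Series (fun k => W k t * ((-1) ^ k * yk k))).
  assert (HZ : ex_series (fun k => W k t)).
  { apply ex_series_extR with (fun k => W k t * 1). intros; ring. apply (ex_W _ 1). intros; rewrite Rabs_R1; lra. }
  assert (HN : ex_series (fun k => W k t * ((-1) ^ k * yk k))).
  { apply (ex_W _ 1). intros k. rewrite Rabs_mult. pose proof (yk_bounds k).
    rewrite pow_1_abs, Rabs_right; lra. }
  assert (Ha : W j t * (yk j + 1) <= (-1) ^ j * N + S).
  { unfold N, S. rewrite <- Series_scal_l, <- Series_plus; auto.
    2: apply ex_series_scalR; auto.
    replace (W j t * (yk j + 1)) with ((-1) ^ j * (W j t * ((-1) ^ j * yk j)) + W j t).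
    2:{ replace ((-1) ^ j * (W j t * ((-1) ^ j * yk j))) with (((-1) ^ j) ^ 2 * (W j t * yk j)) by ring.
        rewrite m1_sq. ring. }
    apply (Series_ge_term (fun k => (-1) ^ j * (W k t * ((-1) ^ k * yk k)) + W k t) j).
    intros k. pose proof (W_pos k t). pose proof (yk_bounds k).
    destruct (m1_abs k) as [-> | ->]; destruct (m1_abs j) as [-> | ->]; nra.
    apply ex_series_plusR; auto. apply ex_series_scalR; auto. }
  pose proof (Ssum_bound j Hj) as Hb. fold t S in Hb.
  pose proof q5_bounds. pose proof (yk_ge j Hj). pose proof (W_pos j t).
  assert ((1 + q5) / (1 - q5) <= 33 / 31).
  { apply Rmult_le_reg_r with (1 - q5). lra. field_simplify; lra. }
  assert (S <= W j t * (33/31)) by (eapply Rle_trans; [apply Hb|apply Rmult_le_compat_l; lra]).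
  assert (0 < S). { pose proof (Series_ge_term (fun k => W k t) j (fun k => Rlt_le _ _ (W_pos k t)) HZ). simpl in H4. fold S in H4. lra. }
  replace ((-1) ^ j * (- N / S)) with (- ((-1) ^ j * N) / S) by (field; lra).
  apply Rmult_le_reg_r with S; auto. field_simplify; [|lra].
  nra.
Qed.

End M_O.
Import M_O.

Module M_U.
Open Scope R_scope.

Lemma cmp_mono (g h g' h' : R -> R) t : 0 <= t ->
  (forall s, is_derive g s (g' s)) -> (forall s, is_derive h s (h' s)) ->
  (forall s, 0 <= s <= t -> g' s <= h' s) -> g 0 <= h 0 -> g t <= h t.
Proof. intros Ht Hg Hh Hle H0.
  destruct (Req_dec t 0) as [->|Hne]; auto.
  destruct (MVT_cor2 (fun s => h s - g s) (fun s => h' s - g' s) 0 t) as [c [Hc1 Hc2]]. lra.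
  { intros c Hc. apply is_derive_Reals. apply (rd_minus _ _ _ _ _ (Hh c) (Hg c)). }
  assert (h' c - g' c >= 0) by (specialize (Hle c ltac:(lra)); lra).
  assert (0 <= (h' c - g' c) * (t - 0)) by (apply Rmult_le_pos; lra). lra. Qed.

Lemma Cmod_le_parts z : Cmod z <= Rabs (Re z) + Rabs (Im z).
Proof. destruct z as [a b]. unfold Cmod, Re, Im; simpl.
  rewrite <- (sqrt_Rsqr (Rabs a + Rabs b)) by (pose proof (Rabs_pos a); pose proof (Rabs_pos b); lra).
  apply sqrt_le_1_alt. unfold Rsqr. pose proof (Rabs_pos a). pose proof (Rabs_pos b).
  replace (a * (a * 1) + b * (b * 1)) with (Rabs a * Rabs a + Rabs b * Rabs b).
  nra. rewrite <- !Rabs_mult. rewrite !Rabs_right by nra. ring. Qed.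

Lemma im_le_Cmod2 c : Rabs (Im c) <= Cmod c.
Proof. destruct c as [a b]. unfold Cmod, Im; simpl. rewrite <- sqrt_Rsqr_abs.
  apply sqrt_le_1_alt. unfold Rsqr. nra. Qed.

Definition Fv (x y z : C) : C := Cmult (RtoC (1 - Cmod y ^ 2)) (Cminus z x).

Lemma Fv_lip x y z x' y' z' : Cmod y < 1 -> Cmod y' < 1 -> Cmod z' < 1 -> Cmod x' <= 1 ->
  Cmod (Cminus (Fv x y z) (Fv x' y' z')) <= Cmod (Cminus x x') + 4 * Cmod (Cminus y y') + Cmod (Cminus z z').
Proof. intros Hy Hy' Hz' Hx'. unfold Fv.
  replace (Cminus (Cmult (RtoC (1 - Cmod y ^ 2)) (Cminus z x)) (Cmult (RtoC (1 - Cmod y' ^ 2)) (Cminus z' x')))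
    with (Cplus (Cmult (RtoC (1 - Cmod y ^ 2)) (Cminus (Cminus z z') (Cminus x x')))
                (Cmult (RtoC (Cmod y' ^ 2 - Cmod y ^ 2)) (Cminus z' x')))
    by (unfold RtoC, Cmult, Cminus, Cplus, Copp; simpl; f_equal; ring).
  eapply Rle_trans. apply Cmod_triangle. rewrite !Cmod_mult, !Cmod_R.
  pose proof (Cmod_ge_0 y). pose proof (Cmod_ge_0 y').
  assert (A1 : Rabs (1 - Cmod y ^ 2) <= 1) by (rewrite Rabs_right; nra).
  assert (A2 : Cmod (Cminus (Cminus z z') (Cminus x x')) <= Cmod (Cminus z z') + Cmod (Cminus x x')).
  { unfold Cminus at 1. eapply Rle_trans. apply Cmod_triangle. rewrite Cmod_opp. lra. }
  assert (A3 : Rabs (Cmod y' ^ 2 - Cmod y ^ 2) <= 2 * Cmod (Cminus y y')).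
  { replace (Cmod y' ^ 2 - Cmod y ^ 2) with ((Cmod y' + Cmod y) * (Cmod y' - Cmod y)) by ring.
    rewrite Rabs_mult. rewrite (Rabs_right (Cmod y' + Cmod y)) by lra.
    assert (Rabs (Cmod y' - Cmod y) <= Cmod (Cminus y y')).
    { apply Rabs_le. split.
      - pose proof (Cmod_triangle (Cminus y y') y'). replace (Cplus (Cminus y y') y') with y in H1 by ring. lra.
      - pose proof (Cmod_triangle (Cminus y' y) y). replace (Cplus (Cminus y' y) y) with y' in H1 by ring.
        replace (Cminus y' y) with (Copp (Cminus y y')) in H1 by ring. rewrite Cmod_opp in H1. lra. }
    pose proof (Rabs_pos (Cmod y' - Cmod y)). nra. }
  assert (A4 : Cmod (Cminus z' x') <= 2).
  { unfold Cminus. eapply Rle_trans. apply Cmod_triangle. rewrite Cmod_opp. lra. }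
  pose proof (Cmod_ge_0 (Cminus (Cminus z z') (Cminus x x'))).
  pose proof (Cmod_ge_0 (Cminus y y')). pose proof (Cmod_ge_0 (Cminus z' x')).
  pose proof (Rabs_pos (1 - Cmod y ^ 2)). pose proof (Rabs_pos (Cmod y' ^ 2 - Cmod y ^ 2)).
  assert (Rabs (1 - Cmod y ^ 2) * Cmod (Cminus (Cminus z z') (Cminus x x')) <= Cmod (Cminus z z') + Cmod (Cminus x x')) by nra.
  assert (Rabs (Cmod y' ^ 2 - Cmod y ^ 2) * Cmod (Cminus z' x') <= 2 * Cmod (Cminus y y') * 2) by nra.
  lra.
Qed.

Lemma h_deriv k s : is_derive (fun s => (12 * s) ^ (S k) / INR (Factorial.fact (S k))) s
   (12 * (12 * s) ^ k / INR (Factorial.fact k)).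
Proof. auto_derive. auto.
  change (match k with 0%nat => 1 | S _ => INR k + 1 end) with (INR (S k)).
  replace (INR (Factorial.fact k + k * Factorial.fact k)) with (INR (S k) * INR (Factorial.fact k)) by (rewrite <- mult_INR; reflexivity).
  pose proof (INR_fact_neq_0 k). pose proof (pos_INR k). rewrite S_INR. simpl pred. field. split; lra. Qed.

Lemma prev_bound (a : nat -> R -> C) n t : (forall m s, Cmod (a m s) < 1) -> Cmod (alpha_prev a n t) <= 1.
Proof. intros H. destruct n; simpl. rewrite Cmod_R, Rabs_left by lra. lra. apply Rlt_le, H. Qed.

Lemma uniq (a0 : nat -> C) (a b : nat -> R -> C) :
  schur_flow_solution a0 a -> schur_flow_solution a0 b -> forall n t, 0 <= t -> a n t = b n t.
Proof.
  intros [Da [Ia Ha]] [Db [Ib Hb]].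
  unfold in_disk in *.
  assert (K : forall k n t, 0 <= t -> Cmod (Cminus (a n t) (b n t)) <= 2 * ((12 * t) ^ k / INR (Factorial.fact k))).
  { induction k as [|k IH]; intros n t Ht.
    - simpl. replace (1 / 1) with 1 by field. unfold Cminus. eapply Rle_trans. apply Cmod_triangle.
      rewrite Cmod_opp. specialize (Da n t); specialize (Db n t). lra.
    - set (f := fun s => Cminus (a n s) (b n s)).
      set (Df := fun s => Cminus (Fv (alpha_prev a n s) (a n s) (a (S n) s)) (Fv (alpha_prev b n s) (b n s) (b (S n) s))).
      assert (Hf : forall s, is_derive f s (Df s)).
      { intros s. apply cd_minus. apply Ha. apply Hb. }
      assert (HD : forall s, 0 <= s -> Cmod (Df s) <= 12 * (12 * s) ^ k / INR (Factorial.fact k)).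
      { intros s Hs. unfold Df. eapply Rle_trans. apply Fv_lip; auto. apply prev_bound; auto.
        assert (Cmod (Cminus (alpha_prev a n s) (alpha_prev b n s)) <= 2 * ((12 * s) ^ k / INR (Factorial.fact k))).
        { destruct n; simpl. replace (Cminus (RtoC (-1)) (RtoC (-1))) with (RtoC 0) by ring. rewrite Cmod_0.
          pose proof (pow_le (12 * s) k ltac:(lra)). pose proof (INR_fact_lt_0 k).
          assert (0 <= (12 * s) ^ k / INR (Factorial.fact k)) by (apply Rdiv_le_0_compat; lra). lra.
          apply IH; auto. }
        pose proof (IH n s Hs). pose proof (IH (S n) s Hs). unfold Rdiv in *. lra. }
      set (h := fun s => (12 * s) ^ (S k) / INR (Factorial.fact (S k))).
      assert (Hh : forall s, is_derive h s (12 * (12 * s) ^ k / INR (Factorial.fact k))) by (intros; apply h_deriv).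
      assert (f0 : f 0 = RtoC 0). { unfold f. rewrite Ia, Ib. ring. }
      assert (h0 : h 0 = 0). { unfold h. rewrite Rmult_0_r, pow_i by lia. unfold Rdiv; ring. }
      assert (B1 : Re (f t) <= h t).
      { apply (cmp_mono (fun s => Re (f s)) h (fun s => Re (Df s)) (fun s => 12 * (12 * s) ^ k / INR (Factorial.fact k)) t Ht).
        intros s; apply is_derive_Re, Hf. auto.
        intros s [Hs _]. eapply Rle_trans. apply Rle_abs. eapply Rle_trans. apply re_le_Cmod. apply HD; auto.
        rewrite f0, h0. simpl. lra. }
      assert (B2 : - Re (f t) <= h t).
      { apply (cmp_mono (fun s => - Re (f s)) h (fun s => - Re (Df s)) (fun s => 12 * (12 * s) ^ k / INR (Factorial.fact k)) t Ht).
        intros s; apply rd_opp, is_derive_Re, Hf. auto.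
        intros s [Hs _]. apply Rle_trans with (Rabs (Re (Df s))). rewrite <- Rabs_Ropp. apply Rle_abs. eapply Rle_trans. apply re_le_Cmod. apply HD; auto.
        rewrite f0, h0. simpl. lra. }
      assert (B3 : Im (f t) <= h t).
      { apply (cmp_mono (fun s => Im (f s)) h (fun s => Im (Df s)) (fun s => 12 * (12 * s) ^ k / INR (Factorial.fact k)) t Ht).
        intros s; apply is_derive_Im, Hf. auto.
        intros s [Hs _]. eapply Rle_trans. apply Rle_abs. eapply Rle_trans. apply im_le_Cmod2. apply HD; auto.
        rewrite f0, h0. simpl. lra. }
      assert (B4 : - Im (f t) <= h t).
      { apply (cmp_mono (fun s => - Im (f s)) h (fun s => - Im (Df s)) (fun s => 12 * (12 * s) ^ k / INR (Factorial.fact k)) t Ht).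
        intros s; apply rd_opp, is_derive_Im, Hf. auto.
        intros s [Hs _]. apply Rle_trans with (Rabs (Im (Df s))). rewrite <- Rabs_Ropp. apply Rle_abs. eapply Rle_trans. apply im_le_Cmod2. apply HD; auto.
        rewrite f0, h0. simpl. lra. }
      change (Cmod (f t) <= 2 * h t).
      eapply Rle_trans. apply Cmod_le_parts.
      assert (Rabs (Re (f t)) <= h t) by (apply Rabs_le; lra).
      assert (Rabs (Im (f t)) <= h t) by (apply Rabs_le; lra). lra. }
  intros n t Ht.
  assert (Z : Cmod (Cminus (a n t) (b n t)) = 0).
  { apply Rle_antisym; [|apply Cmod_ge_0].
    apply Rnot_lt_le. intros Hpos.
    destruct (cv_speed_pow_fact (12 * t) (Cmod (Cminus (a n t) (b n t)) / 4)) as [N HN].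
    apply Rdiv_lt_0_compat; lra.
    specialize (HN N (le_n _)). unfold Rdist in HN. rewrite Rminus_0_r in HN.
    pose proof (K N n t Ht). pose proof (Rle_abs ((12 * t) ^ N / INR (Factorial.fact N))). lra. }
  apply Cmod_eq_0 in Z. replace (a n t) with (Cplus (Cminus (a n t) (b n t)) (b n t)) by ring.
  rewrite Z. ring.
Qed.

End M_U.
Import M_U.

Open Scope R_scope.

Definition sol (n : nat) (t : R) : C := alph Tm t n.

Lemma sol_ok : schur_flow_solution (fun n => sol n 0) sol.
Proof. split; [|split].
  - intros n t. unfold in_disk, sol. apply alph_disk. apply Tm_S. apply Tm_H. apply Tm_pos.
  - intros n; reflexivity.
  - intros n t. unfold sol. apply (alpha_flow Tm Tm_S Tm_H Tm_pos Tm_D n t).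
Qed.

Lemma tj_big j : 10 * (1 + INR j) <= tj j.
Proof. unfold tj. pose proof (pow2_ge j). lra. Qed.

Theorem proposition1p3 :
  exists a0 : nat -> C,
    (forall n, in_disk (a0 n)) /\
    (exists a : nat -> R -> C, schur_flow_solution a0 a) /\
    (forall a : nat -> R -> C, schur_flow_solution a0 a ->
       ~ (exists l : C, filterlim (a 0%nat) (Rbar_locally p_infty) (locally l))).
Proof.
  exists (fun n => sol n 0). split; [|split].
  - intros n. apply sol_ok.
  - exists sol. apply sol_ok.
  - intros a Ha [l Hl].
    assert (Eq : forall t, 0 <= t -> a 0%nat t = sol 0%nat t).
    { intros t Ht. apply (uniq _ a sol Ha sol_ok 0 t Ht). }
    pose proof (proj1 (@filterlim_locally R C_UniformSpace (Rbar_locally p_infty) (@filter_filter _ _ (Rbar_locally_filter p_infty)) (a 0%nat) l) Hl) as Hl2. clear Hl. rename Hl2 into Hl.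
    assert (e : 0 < 1/4) by lra.
    destruct (Hl (mkposreal _ e)) as [M HM].
    destruct (INR_archimed 1 M ltac:(lra)) as [N HN]. rewrite Rmult_1_r in HN.
    assert (Him : forall j, Rabs (Im (a 0%nat (tj j)) - Im l) < 1/4 -> (0 < j)%nat ->
               (-1) ^ j * Im (a 0%nat (tj j)) <= -1/2).
    { intros j _ Hj. rewrite Eq. apply osc; auto. unfold tj. pose proof (pow_lt 2 j). lra. }
    assert (Hb : forall j, (N <= j)%nat -> Rabs (Im (a 0%nat (tj j)) - Im l) < 1/4).
    { intros j Hj. assert (M < tj j).
      { pose proof (tj_big j). apply le_INR in Hj. pose proof (pos_INR j). lra. }
      specialize (HM _ H). destruct HM as [_ H2]. exact H2. }
    pose proof (Hb (2 * (S N))%nat ltac:(lia)) as B1.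
    pose proof (Hb (S (2 * (S N))) ltac:(lia)) as B2.
    pose proof (Him _ B1 ltac:(lia)) as C1. pose proof (Him _ B2 ltac:(lia)) as C2.
    rewrite pow_1_even in C1. rewrite pow_1_odd in C2.
    apply Rabs_lt_between in B1. apply Rabs_lt_between in B2. lra.
Qed.
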